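(* Under the hypotheses of Theorem 4.1 (with $\Lambda=(\lambda_1,\dots,\lambda_n)$, $P$, $v_0$, $R$, $\theta$, $a^0$ as there), let $v^\epsilon(t)$ be the solution of $\dot v_j+\mathbf{i}\lambda_jv_j=\epsilon P_j(v)$, $1\le j\le n$, $v(0)=v_0$. Then for every $j$, $$\sup_{|t|\le\epsilon^{-1}\theta}\big||v^\epsilon_j(t)|-|a^0_j(\epsilon t)|\big|\to0\quad\text{as }\epsilon\to0.$$
   Context: Theorem 4.1 setting: $\Lambda\in(\mathbb{R}\setminus\{0\})^n$; $P\in\mathrm{Lip}_{\mathcal{X}}(\mathbb{C}^n,\mathbb{C}^n)$, i.e. $P$ is continuous with $\sup_{B_r}|P|\le\mathcal{X}(r)$ and $\mathrm{Lip}(P|_{B_r})\le\mathcal{X}(r)$ for all $r\ge0$, for a non-decreasing continuous $\mathcal{X}:\mathbb{R}_+\to\mathbb{R}_+$; $|v_0|=R>0$, $\mathcal{X}(2R)>0$, $\theta=R/\mathcal{X}(2R)$; $a^0$ is the solution on $[-\theta,\theta]$ of $\partial_\tau a=\langle\langle P\rangle\rangle(a)$, $a(0)=v_0$, where $\langle\langle P\rangle\rangle(a)=\lim_{T\to\pm\infty}\frac1{|T|}\int_0^T\Phi_{\Lambda t}P(\Phi_{-\Lambda t}a)\,dt$ and $\Phi_w=\mathrm{diag}(e^{\mathbf{i}w_j})$. *)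

(* Defs.v *)
From Stdlib Require Import Reals.
Open Scope R_scope.

Definition Cx : Type := (R * R)%type.
Definition Cre (z : Cx) : R := fst z.
Definition Cim (z : Cx) : R := snd z.
Definition C0 : Cx := (0, 0).
Definition Cadd (z w : Cx) : Cx := (fst z + fst w, snd z + snd w).
Definition Csub (z w : Cx) : Cx := (fst z - fst w, snd z - snd w).
Definition Cmul (z w : Cx) : Cx :=
  (fst z * fst w - snd z * snd w, fst z * snd w + snd z * fst w).
Definition Cscale (r : R) (z : Cx) : Cx := (r * fst z, r * snd z).
Definition Cexpi (t : R) : Cx := (cos t, sin t).
Definition Cnorm (z : Cx) : R := sqrt (fst z ^ 2 + snd z ^ 2).

(* ---------- vectors of Cx^n, represented as nat -> Cx (only j < n matter) ---------- *)
Fixpoint sumR (n : nat) (f : nat -> R) : R :=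
  match n with O => 0 | S k => sumR k f + f k end.

Definition vnorm (n : nat) (v : nat -> Cx) : R :=
  sqrt (sumR n (fun j => Cnorm (v j) ^ 2)).
Definition vsub (u v : nat -> Cx) : nat -> Cx := fun j => Csub (u j) (v j).

Definition PhiL (Lam : nat -> R) (t : R) (v : nat -> Cx) : nat -> Cx :=
  fun j => Cmul (Cexpi (Lam j * t)) (v j).

Definition admissible_X (X : R -> R) : Prop :=
  (forall r, 0 <= r -> 0 <= X r) /\
  (forall r s, 0 <= r -> r <= s -> X r <= X s) /\
  (forall r, 0 <= r -> forall e, 0 < e -> exists d, 0 < d /\
      forall s, 0 <= s -> Rabs (s - r) < d -> Rabs (X s - X r) < e).

Definition Lip_X (n : nat) (X : R -> R) (P : (nat -> Cx) -> (nat -> Cx)) : Prop :=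
  (forall u e, 0 < e -> exists d, 0 < d /\
      forall w, vnorm n (vsub w u) < d -> vnorm n (vsub (P w) (P u)) < e) /\
  (forall r, 0 <= r -> forall v, vnorm n v <= r -> vnorm n (P v) <= X r) /\
  (forall r, 0 <= r -> forall u v, vnorm n u <= r -> vnorm n v <= r ->
      vnorm n (vsub (P u) (P v)) <= X r * vnorm n (vsub u v)).

Definition cont_on (n : nat) (f : R -> nat -> Cx) (a b : R) : Prop :=
  forall t, a <= t <= b -> forall e, 0 < e -> exists d, 0 < d /\
    forall s, a <= s <= b -> Rabs (s - t) < d -> vnorm n (vsub (f s) (f t)) < e.

Definition deriv_at (n : nat) (f : R -> nat -> Cx) (t : R) (g : nat -> Cx) : Prop :=
  forall j, (j < n)%nat ->
    derivable_pt_lim (fun s => Cre (f s j)) t (Cre (g j)) /\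
    derivable_pt_lim (fun s => Cim (f s j)) t (Cim (g j)).

(* w_j = lim_{T -> +oo} (1/T) int_0^T (Phi_{Lambda t} P(Phi_{-Lambda t} a))_j dt,
   where the integral int_0^T g is written as G(T), G the primitive of the
   (continuous) integrand g with G(0) = 0. *)
Definition is_resonant_avg (n : nat) (Lam : nat -> R) (P : (nat -> Cx) -> (nat -> Cx))
    (a w : nat -> Cx) : Prop :=
  forall j, (j < n)%nat ->
    let g := fun t => PhiL Lam t (P (PhiL Lam (- t) a)) j in
    exists G : R -> Cx, G 0 = C0 /\
      (forall t, derivable_pt_lim (fun s => Cre (G s)) t (Cre (g t)) /\
                 derivable_pt_lim (fun s => Cim (G s)) t (Cim (g t))) /\
      (forall e, 0 < e -> exists T0, forall T, T0 < T ->
          Cnorm (Csub (Cscale (/ T) (G T)) (w j)) < e).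

Definition solves_effective (n : nat) (Lam : nat -> R) (P : (nat -> Cx) -> (nat -> Cx))
    (v0 : nat -> Cx) (th : R) (a : R -> nat -> Cx) : Prop :=
  (forall j, (j < n)%nat -> a 0 j = v0 j) /\
  cont_on n a (- th) th /\
  (forall tau, - th < tau < th ->
     exists w, is_resonant_avg n Lam P (a tau) w /\ deriv_at n a tau w).

Definition solves_eps (n : nat) (Lam : nat -> R) (P : (nat -> Cx) -> (nat -> Cx))
    (eps : R) (v0 : nat -> Cx) (T : R) (v : R -> nat -> Cx) : Prop :=
  (forall j, (j < n)%nat -> v 0 j = v0 j) /\
  cont_on n v (- T) T /\
  (forall t, - T < t < T ->
     deriv_at n v t
       (fun j => Cadd (Cmul (0, - Lam j) (v t j)) (Cscale eps (P (v t) j)))).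

(* Main.v *)
Require Import Defs.
From Stdlib Require Import Reals Lra Lia Psatz FunctionalExtensionality Classical ClassicalEpsilon ZArith.
From Coquelicot Require Import Coquelicot.
Open Scope R_scope.

Definition vsq (n : nat) (v : nat -> Cx) : R :=
  sumR n (fun j => fst (v j) ^ 2 + snd (v j) ^ 2).
Definition ip (n : nat) (u v : nat -> Cx) : R :=
  sumR n (fun j => fst (u j) * fst (v j) + snd (u j) * snd (v j)).
Definition vadd (u v : nat -> Cx) : nat -> Cx := fun j => Cadd (u j) (v j).
Definition vscale (r : R) (v : nat -> Cx) : nat -> Cx := fun j => Cscale r (v j).

Lemma sumR_ext n f g : (forall j, (j < n)%nat -> f j = g j) -> sumR n f = sumR n g.
Proof.
  induction n; simpl; intros H; auto.
  rewrite IHn by (intros; apply H; lia). rewrite H by lia. auto.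
Qed.

Lemma sumR_le n f g : (forall j, (j < n)%nat -> f j <= g j) -> sumR n f <= sumR n g.
Proof.
  induction n; simpl; intros H; [lra|].
  assert (sumR n f <= sumR n g) by (apply IHn; intros; apply H; lia).
  assert (f n <= g n) by (apply H; lia). lra.
Qed.

Lemma sumR_nonneg n f : (forall j, (j < n)%nat -> 0 <= f j) -> 0 <= sumR n f.
Proof.
  intros H. replace 0 with (sumR n (fun _ => 0)).
  apply sumR_le; auto. induction n; simpl; auto. rewrite IHn; [lra|]. intros; apply H; lia.
Qed.

Lemma sumR_plus n f g : sumR n (fun j => f j + g j) = sumR n f + sumR n g.
Proof. induction n; simpl; [lra|]. rewrite IHn. lra. Qed.

Lemma sumR_scal n c f : sumR n (fun j => c * f j) = c * sumR n f.
Proof. induction n; simpl; [lra|]. rewrite IHn. lra. Qed.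

Lemma sumR_const n c : sumR n (fun _ => c) = INR n * c.
Proof. induction n; simpl sumR; [simpl; lra|]. rewrite IHn, S_INR. lra. Qed.

Lemma Cnorm_sq z : Cnorm z ^ 2 = fst z ^ 2 + snd z ^ 2.
Proof. unfold Cnorm. rewrite pow2_sqrt; auto. nra. Qed.

Lemma Cnorm_nonneg z : 0 <= Cnorm z.
Proof. apply sqrt_pos. Qed.

Lemma vsq_nonneg n v : 0 <= vsq n v.
Proof. apply sumR_nonneg. intros; nra. Qed.

Lemma vnorm_vsq n v : vnorm n v = sqrt (vsq n v).
Proof. unfold vnorm, vsq. f_equal. apply sumR_ext. intros; apply Cnorm_sq. Qed.

Lemma vnorm_nonneg n v : 0 <= vnorm n v.
Proof. apply sqrt_pos. Qed.

Lemma vnorm_sq n v : vnorm n v ^ 2 = vsq n v.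
Proof. rewrite vnorm_vsq, pow2_sqrt; auto. apply vsq_nonneg. Qed.

Lemma vnorm_ext n u v : (forall j, (j < n)%nat -> u j = v j) -> vnorm n u = vnorm n v.
Proof. intros H. unfold vnorm. f_equal. apply sumR_ext. intros; rewrite H; auto. Qed.

Lemma vsq_ext n u v : (forall j, (j < n)%nat -> u j = v j) -> vsq n u = vsq n v.
Proof. intros H. unfold vsq. apply sumR_ext. intros; rewrite H; auto. Qed.

Lemma cs_step S A B p a b : 0 <= A -> 0 <= B -> 0 <= a -> 0 <= b ->
  S ^ 2 <= A * B -> p ^ 2 <= a * b -> (S + p) ^ 2 <= (A + a) * (B + b).
Proof.
  intros HA HB Ha Hb H1 H2.
  assert (2 * S * p <= A * b + a * B).
  { assert (HSp : (S * p) ^ 2 <= (A * b) * (a * B)).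
    { replace ((S*p)^2) with (S^2 * p^2) by ring. replace ((A * b) * (a * B)) with ((A*B)*(a*b)) by ring.
      apply Rmult_le_compat; auto; nra. }
    assert (0 <= A * b) by (apply Rmult_le_pos; auto). assert (0 <= a * B) by (apply Rmult_le_pos; auto).
    assert (Hm : (S*p)^2 <= ((A*b + a*B)/2)^2).
    { eapply Rle_trans. apply HSp. assert (0 <= (A*b - a*B)^2) by (apply pow2_ge_0). lra. }
    destruct (Rle_dec (S*p) 0). nra.
    assert (S * p <= (A*b+a*B)/2). { apply Rsqr_incr_0_var. unfold Rsqr. nra. nra. } lra. }
  nra.
Qed.

Lemma ip_cs n u v : ip n u v ^ 2 <= vsq n u * vsq n v.
Proof.
  unfold ip, vsq. induction n; simpl. lra.
  apply cs_step; try (apply sumR_nonneg; intros; nra); try nra; auto.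
  pose proof (pow2_ge_0 (fst (u n) * snd (v n) - snd (u n) * fst (v n))). nra.
Qed.

Lemma ip_le n u v : ip n u v <= vnorm n u * vnorm n v.
Proof.
  rewrite !vnorm_vsq, <- sqrt_mult by apply vsq_nonneg.
  destruct (Rle_dec (ip n u v) 0). { pose proof (sqrt_pos (vsq n u * vsq n v)). lra. }
  rewrite <- (sqrt_pow2 (ip n u v)) by lra. apply sqrt_le_1_alt. apply ip_cs.
Qed.

Lemma vsq_add n u v : vsq n (vadd u v) = vsq n u + 2 * ip n u v + vsq n v.
Proof.
  unfold vsq, ip, vadd, Cadd. induction n; simpl. lra. simpl in IHn. rewrite IHn. ring.
Qed.

Lemma vnorm_add n u v : vnorm n (vadd u v) <= vnorm n u + vnorm n v.
Proof.
  pose proof (vnorm_nonneg n u). pose proof (vnorm_nonneg n v).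
  pose proof (vnorm_nonneg n (vadd u v)).
  apply Rsqr_incr_0_var; auto; try lra. unfold Rsqr.
  pose proof (vnorm_sq n (vadd u v)). pose proof (vnorm_sq n u). pose proof (vnorm_sq n v).
  rewrite vsq_add in H2. pose proof (ip_le n u v). nra.
Qed.

Lemma vnorm_scale n r v : vnorm n (vscale r v) = Rabs r * vnorm n v.
Proof.
  rewrite !vnorm_vsq. rewrite <- (sqrt_pow2 (Rabs r)) by apply Rabs_pos.
  rewrite <- sqrt_mult; [|nra|apply vsq_nonneg]. f_equal.
  unfold vsq, vscale, Cscale. simpl. rewrite <- sumR_scal. apply sumR_ext. intros.
  assert (E: Rabs r * Rabs r = r * r) by (rewrite <- Rabs_mult; apply Rabs_pos_eq; nra). nra.
Qed.

Lemma vsub_as_add u v : vsub u v = vadd u (vscale (-1) v).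
Proof.
  apply functional_extensionality; intro j. unfold vsub, vadd, vscale, Csub, Cadd, Cscale.
  simpl. f_equal; ring.
Qed.

Lemma vnorm_sub_sym n u v : vnorm n (vsub u v) = vnorm n (vsub v u).
Proof.
  replace (vsub u v) with (vscale (-1) (vsub v u)).
  rewrite vnorm_scale. rewrite Rabs_left by lra. ring.
  apply functional_extensionality; intro j. unfold vsub, vscale, Csub, Cscale.
  simpl. f_equal; ring.
Qed.

Lemma vnorm_tri n u v w : vnorm n (vsub u w) <= vnorm n (vsub u v) + vnorm n (vsub v w).
Proof.
  replace (vsub u w) with (vadd (vsub u v) (vsub v w)). apply vnorm_add.
  apply functional_extensionality; intro j. unfold vsub, vadd, Csub, Cadd.
  simpl. f_equal; ring.
Qed.

Definition vzero : nat -> Cx := fun _ => C0.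

Lemma vnorm_zero n : vnorm n vzero = 0.
Proof.
  rewrite vnorm_vsq. unfold vsq. rewrite (sumR_ext n _ (fun _ => 0)).
  rewrite sumR_const, Rmult_0_r. apply sqrt_0. intros; unfold vzero, C0; simpl; ring.
Qed.

Lemma vsub_self u : vsub u u = vzero.
Proof. apply functional_extensionality; intro j. unfold vsub, vzero, Csub, C0. f_equal; ring. Qed.

Lemma vnorm_sub_self n u : vnorm n (vsub u u) = 0.
Proof. rewrite vsub_self. apply vnorm_zero. Qed.

Lemma vnorm_rev_tri n u v : Rabs (vnorm n u - vnorm n v) <= vnorm n (vsub u v).
Proof.
  assert (Hu : vnorm n u <= vnorm n (vsub u v) + vnorm n v).
  { replace u with (vadd (vsub u v) v) at 1. apply vnorm_add.
    apply functional_extensionality; intro j. unfold vsub, vadd, Csub, Cadd. 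
    destruct (u j); simpl; f_equal; ring. }
  assert (Hv : vnorm n v <= vnorm n (vsub v u) + vnorm n u).
  { replace v with (vadd (vsub v u) u) at 1. apply vnorm_add.
    apply functional_extensionality; intro j. unfold vsub, vadd, Csub, Cadd.
    destruct (v j); simpl; f_equal; ring. }
  rewrite vnorm_sub_sym in Hv. apply Rabs_le. lra.
Qed.

Lemma sumR_single_le n f j : (forall i, (i < n)%nat -> 0 <= f i) -> (j < n)%nat -> f j <= sumR n f.
Proof.
  induction n; simpl; intros H Hj; [lia|].
  destruct (Nat.eq_dec j n). subst. pose proof (sumR_nonneg n f). 
  assert (0 <= sumR n f) by (apply sumR_nonneg; intros; apply H; lia). lra.
  assert (f j <= sumR n f) by (apply IHn; [intros; apply H; lia| lia]).
  assert (0 <= f n) by (apply H; lia). lra.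
Qed.

Lemma Cnorm_le_vnorm n v j : (j < n)%nat -> Cnorm (v j) <= vnorm n v.
Proof.
  intros Hj. unfold vnorm. rewrite <- (sqrt_pow2 (Cnorm (v j))) by apply Cnorm_nonneg.
  apply sqrt_le_1_alt. apply (sumR_single_le n (fun j => Cnorm (v j) ^ 2)); auto.
  intros; nra.
Qed.

Lemma fst_le_Cnorm z : Rabs (fst z) <= Cnorm z.
Proof. unfold Cnorm. rewrite <- (sqrt_pow2 (Rabs _)) by apply Rabs_pos. apply sqrt_le_1_alt.
  rewrite pow2_abs. nra. Qed.
Lemma snd_le_Cnorm z : Rabs (snd z) <= Cnorm z.
Proof. unfold Cnorm. rewrite <- (sqrt_pow2 (Rabs _)) by apply Rabs_pos. apply sqrt_le_1_alt.
  rewrite pow2_abs. nra. Qed.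

Lemma Cnorm_le_comps z : Cnorm z <= Rabs (fst z) + Rabs (snd z).
Proof.
  unfold Cnorm. rewrite <- (sqrt_pow2 (Rabs (fst z) + Rabs (snd z))).
  apply sqrt_le_1_alt. pose proof (Rabs_pos (fst z)). pose proof (Rabs_pos (snd z)).
  rewrite <- (pow2_abs (fst z)), <- (pow2_abs (snd z)). nra.
  pose proof (Rabs_pos (fst z)). pose proof (Rabs_pos (snd z)). lra.
Qed.

Lemma sqrt_add_sq A c : 0 <= A -> 0 <= c -> sqrt (A + c ^ 2) <= sqrt A + c.
Proof.
  intros HA Hc. pose proof (sqrt_pos A). pose proof (sqrt_sqrt A HA).
  rewrite <- (sqrt_pow2 (sqrt A + c)) by lra. apply sqrt_le_1_alt. nra.
Qed.

Lemma vnorm_le_sum n v : vnorm n v <= sumR n (fun j => Cnorm (v j)).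
Proof.
  unfold vnorm. induction n. simpl. rewrite sqrt_0; lra.
  change (sqrt (sumR n (fun j => Cnorm (v j) ^ 2) + Cnorm (v n) ^ 2) <= sumR n (fun j => Cnorm (v j)) + Cnorm (v n)).
  assert (0 <= sumR n (fun j => Cnorm (v j) ^ 2)) by (apply sumR_nonneg; intros; nra).
  pose proof (Cnorm_nonneg (v n)).
  eapply Rle_trans. apply sqrt_add_sq; auto. lra.
Qed.

Lemma vnorm_le_comp n v c : (forall j, (j < n)%nat -> Cnorm (v j) <= c) -> vnorm n v <= INR n * c.
Proof.
  intros H. eapply Rle_trans. apply vnorm_le_sum. rewrite <- sumR_const. apply sumR_le. auto.
Qed.

Lemma vnorm_le_comp2 n v c : (forall j, (j < n)%nat -> Rabs (fst (v j)) <= c /\ Rabs (snd (v j)) <= c) ->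
  vnorm n v <= 2 * INR n * c.
Proof.
  intros H. replace (2 * INR n * c) with (INR n * (2 * c)) by ring. apply vnorm_le_comp.
  intros j Hj. destruct (H j Hj). eapply Rle_trans. apply Cnorm_le_comps. lra.
Qed.

Lemma abs_le_split x y : Rabs x <= y -> - y <= x <= y.
Proof. intros H. pose proof (Rle_abs x). pose proof (Rle_abs (- x)). rewrite Rabs_Ropp in H1. lra. Qed.

Definition rcont (f : R -> R) (a b : R) : Prop :=
  forall t, a <= t <= b -> forall e, 0 < e -> exists d, 0 < d /\
    forall s, a <= s <= b -> Rabs (s - t) < d -> Rabs (f s - f t) < e.

Lemma deriv_loc (f g : R -> R) x l r : 0 < r -> (forall y, Rabs (y - x) < r -> f y = g y) ->
  derivable_pt_lim f x l -> derivable_pt_lim g x l.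
Proof.
  intros Hr Heq H e He. destruct (H e He) as [d Hd].
  assert (Hm : 0 < Rmin d r) by (apply Rmin_pos; [apply cond_pos|auto]).
  exists (mkposreal _ Hm). intros h Hh Hhd. simpl in Hhd.
  rewrite <- !Heq. apply Hd; auto. eapply Rlt_le_trans; [apply Hhd|apply Rmin_l].
  replace (x - x) with 0 by ring. rewrite Rabs_R0; auto.
  replace (x + h - x) with h by ring. eapply Rlt_le_trans; [apply Hhd|apply Rmin_r].
Qed.

Definition clamp a b t := Rmax a (Rmin b t).

Lemma clamp_in a b t : a <= b -> a <= clamp a b t <= b.
Proof. intros. unfold clamp. split. apply Rmax_l. apply Rmax_lub; auto. apply Rmin_l. Qed.

Lemma clamp_id a b t : a <= t <= b -> clamp a b t = t.
Proof. intros. unfold clamp. rewrite Rmin_right by lra. rewrite Rmax_right; lra. Qed.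

Lemma clamp_lip a b s t : a <= b -> Rabs (clamp a b s - clamp a b t) <= Rabs (s - t).
Proof.
  intros H. pose proof (Rle_abs (s - t)) as H0. pose proof (Rle_abs (-(s - t))) as H1. rewrite Rabs_Ropp in H1.
  unfold clamp, Rmax, Rmin. repeat destruct Rle_dec; apply Rabs_le; lra.
Qed.

Lemma rmvt_nonpos f df a b : a < b -> rcont f a b ->
  (forall t, a < t < b -> derivable_pt_lim f t (df t)) ->
  (forall t, a < t < b -> df t <= 0) -> f b <= f a.
Proof.
  intros Hab Hc Hd Hneg.
  set (g := fun t => f (clamp a b t)).
  assert (Hg : forall t, a < t < b -> derivable_pt_lim g t (df t)).
  { intros t Ht. apply (deriv_loc f g t (df t) (Rmin (t - a) (b - t))).
    apply Rmin_pos; lra. intros y Hy. unfold g. rewrite clamp_id; auto.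
    pose proof (Rmin_l (t-a) (b-t)). pose proof (Rmin_r (t-a) (b-t)).
    apply Rabs_def2 in Hy. lra. apply Hd; auto. }
  assert (Hgc : forall c, a <= c <= b -> continuity_pt g c).
  { intros c Hcab. unfold continuity_pt, continue_in, limit1_in, limit_in. simpl. unfold R_dist.
    intros e He. destruct (Hc c Hcab e He) as [d [Hd0 Hd1]]. exists d. split; auto.
    intros x [_ Hx]. unfold g. simpl.
    replace (f (clamp a b c)) with (f c) by (rewrite clamp_id; auto).
    apply Hd1. apply clamp_in; lra. 
    assert (Hcl : Rabs (clamp a b x - clamp a b c) <= Rabs (x - c)) by (apply clamp_lip; lra).
    rewrite (clamp_id a b c) in Hcl by auto. lra. }
  assert (Hid : forall c, a <= c <= b -> continuity_pt id c) by (intros; apply derivable_continuous_pt; apply derivable_pt_id).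
  assert (pr1 : forall c, a < c < b -> derivable_pt g c).
  { intros c Hcc. exists (df c). apply Hg; auto. }
  assert (pr2 : forall c, a < c < b -> derivable_pt id c).
  { intros. apply derivable_pt_id. }
  destruct (MVT g id a b pr1 pr2 Hab Hgc Hid) as [c [Pc Heq]].
  rewrite (derive_pt_eq_0 g c (df c) (pr1 c Pc) (Hg c Pc)) in Heq.
  rewrite (derive_pt_eq_0 id c 1 (pr2 c Pc) (derivable_pt_lim_id c)) in Heq.
  unfold id in Heq. unfold g in Heq. rewrite !clamp_id in Heq by lra.
  pose proof (Hneg c Pc). nra.
Qed.

Lemma deriv_sumR n (F : R -> nat -> R) (dF : nat -> R) x :
  (forall j, (j < n)%nat -> derivable_pt_lim (fun t => F t j) x (dF j)) ->
  derivable_pt_lim (fun t => sumR n (F t)) x (sumR n dF).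
Proof.
  induction n; intros H; simpl.
  - apply (derivable_pt_lim_const 0).
  - apply (derivable_pt_lim_plus (fun t => sumR n (F t)) (fun t => F t n)).
    apply IHn; intros; apply H; lia. apply H; lia.
Qed.

Lemma deriv_sq f df x : derivable_pt_lim f x df -> derivable_pt_lim (fun t => f t ^ 2) x (2 * f x * df).
Proof.
  intros H. replace (2 * f x * df) with (df * f x + f x * df) by ring.
  eapply derivable_pt_lim_ext with (f := (f * f)%F). intros; unfold mult_fct; simpl; ring.
  apply derivable_pt_lim_mult; auto.
Qed.

Lemma deriv_sub_const f df c x : derivable_pt_lim f x df -> derivable_pt_lim (fun t => f t - c) x df.
Proof.
  intros H. replace df with (df - 0) by ring.
  apply (derivable_pt_lim_minus f (fct_cte c)); auto. apply derivable_pt_lim_const.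
Qed.

Lemma deriv_vsq n (u : R -> nat -> Cx) (d : nat -> Cx) c x : deriv_at n u x d ->
  derivable_pt_lim (fun t => vsq n (vsub (u t) c)) x (2 * ip n (vsub (u x) c) d).
Proof.
  intros H. unfold vsq, ip. rewrite <- sumR_scal.
  apply (deriv_sumR n (fun t j => fst (vsub (u t) c j) ^ 2 + snd (vsub (u t) c j) ^ 2)).
  intros j Hj. destruct (H j Hj) as [H1 H2].
  replace (2 * (fst (vsub (u x) c j) * fst (d j) + snd (vsub (u x) c j) * snd (d j))) with
    (2 * fst (vsub (u x) c j) * fst (d j) + 2 * snd (vsub (u x) c j) * snd (d j)) by ring.
  apply (derivable_pt_lim_plus (fun t => fst (vsub (u t) c j) ^ 2) (fun t => snd (vsub (u t) c j) ^ 2)).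
  - apply (deriv_sq (fun t => fst (vsub (u t) c j))). unfold vsub, Csub; simpl.
    apply deriv_sub_const. apply H1.
  - apply (deriv_sq (fun t => snd (vsub (u t) c j))). unfold vsub, Csub; simpl.
    apply deriv_sub_const. apply H2.
Qed.

Lemma sqrt_sq_eta_lip x y eta : 0 <= x -> 0 <= y -> 0 < eta ->
  Rabs (sqrt (x ^ 2 + eta) - sqrt (y ^ 2 + eta)) <= Rabs (x - y).
Proof.
  intros Hx Hy He.
  assert (G : forall x y, 0 <= x -> 0 <= y -> sqrt (x ^ 2 + eta) <= sqrt (y ^ 2 + eta) + Rabs (x - y)).
  { clear x y Hx Hy. intros x y Hx Hy.
    pose proof (sqrt_pos (y ^ 2 + eta)). pose proof (sqrt_sqrt (y^2+eta)).
    pose proof (Rabs_pos (x - y)).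
    rewrite <- (sqrt_pow2 (sqrt (y ^ 2 + eta) + Rabs (x - y))) by lra.
    apply sqrt_le_1_alt.
    assert (y <= sqrt (y ^ 2 + eta)).
    { rewrite <- (sqrt_pow2 y) at 1 by auto. apply sqrt_le_1_alt. lra. }
    assert (x - y <= Rabs (x - y)) by apply Rle_abs.
    assert ((x-y)^2 = Rabs (x-y) ^ 2) by (rewrite pow2_abs; auto).
    assert (H5: 0 <= y^2 + eta) by nra. specialize (H0 H5). nra. }
  pose proof (G x y Hx Hy). pose proof (G y x Hy Hx). rewrite Rabs_minus_sym in H0.
  apply Rabs_le. lra.
Qed.

Lemma mvi_gen n (u : R -> nat -> Cx) (d : R -> nat -> Cx) (M dM : R -> R) a b :
  a <= b -> cont_on n u a b -> rcont M a b ->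
  (forall t, a < t < b -> deriv_at n u t (d t)) ->
  (forall t, a < t < b -> derivable_pt_lim M t (dM t)) ->
  (forall t, a < t < b -> vnorm n (d t) <= dM t) ->
  vnorm n (vsub (u b) (u a)) <= M b - M a.
Proof.
  intros Hab Hu HM Hd HdM Hle.
  destruct (Req_dec a b) as [<-|Hab']. { rewrite vnorm_sub_self. lra. }
  assert (Hlt : a < b) by lra.
  assert (Key : forall eta, 0 < eta -> vnorm n (vsub (u b) (u a)) <= sqrt eta + M b - M a).
  { intros eta Heta.
    set (psi := fun t => sqrt (vsq n (vsub (u t) (u a)) + eta) - M t).
    assert (Hpos : forall t, 0 < vsq n (vsub (u t) (u a)) + eta).
    { intros; pose proof (vsq_nonneg n (vsub (u t) (u a))); lra. }
    assert (Hps : psi b <= psi a).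
    { apply (rmvt_nonpos psi (fun t => ip n (vsub (u t) (u a)) (d t) / sqrt (vsq n (vsub (u t) (u a)) + eta) - dM t) a b Hlt).
      - intros t Ht e He. destruct (HM t Ht (e/2)) as [d1 [Hd1 Hd1']]; [lra|].
        destruct (Hu t Ht (e/2)) as [d2 [Hd2 Hd2']]; [lra|].
        exists (Rmin d1 d2). split. apply Rmin_pos; auto. intros s Hs Hst.
        unfold psi. 
        replace (sqrt (vsq n (vsub (u s) (u a)) + eta) - M s - (sqrt (vsq n (vsub (u t) (u a)) + eta) - M t))
          with ((sqrt (vsq n (vsub (u s) (u a)) + eta) - sqrt (vsq n (vsub (u t) (u a)) + eta)) - (M s - M t)) by ring.
        eapply Rle_lt_trans. apply Rabs_triang. rewrite Rabs_Ropp.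
        assert (Rabs (M s - M t) < e/2). { apply Hd1'; auto. eapply Rlt_le_trans; [apply Hst|apply Rmin_l]. }
        assert (vnorm n (vsub (u s) (u t)) < e/2). { apply Hd2'; auto. eapply Rlt_le_trans; [apply Hst|apply Rmin_r]. }
        rewrite <- !vnorm_sq.
        enough (Rabs (sqrt (vnorm n (vsub (u s) (u a)) ^ 2 + eta) - sqrt (vnorm n (vsub (u t) (u a)) ^ 2 + eta)) <= vnorm n (vsub (u s) (u t))) by lra.
        eapply Rle_trans. apply sqrt_sq_eta_lip; auto; apply vnorm_nonneg.
        eapply Rle_trans. apply vnorm_rev_tri.
        replace (vsub (vsub (u s) (u a)) (vsub (u t) (u a))) with (vsub (u s) (u t)). lra.
        apply functional_extensionality; intro j; unfold vsub, Csub; simpl; f_equal; ring.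
      - intros t Ht. unfold psi.
        apply (derivable_pt_lim_minus (fun t => sqrt (vsq n (vsub (u t) (u a)) + eta)) M); [|apply HdM; auto].
        replace (ip n (vsub (u t) (u a)) (d t) / sqrt (vsq n (vsub (u t) (u a)) + eta)) with
          (/ (2 * sqrt (vsq n (vsub (u t) (u a)) + eta)) * (2 * ip n (vsub (u t) (u a)) (d t) + 0)).
        2:{ field. apply Rgt_not_eq. apply sqrt_lt_R0. apply Hpos. }
        apply (derivable_pt_lim_comp (fun t => vsq n (vsub (u t) (u a)) + eta) sqrt).
        apply (derivable_pt_lim_plus (fun t => vsq n (vsub (u t) (u a))) (fct_cte eta)).
        apply deriv_vsq. apply Hd; auto. apply derivable_pt_lim_const.
        apply derivable_pt_lim_sqrt. apply Hpos.
      - intros t Ht. pose proof (Hle t Ht).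
        pose proof (ip_le n (vsub (u t) (u a)) (d t)).
        pose proof (vnorm_nonneg n (d t)). pose proof (vnorm_nonneg n (vsub (u t) (u a))).
        assert (Hs : vnorm n (vsub (u t) (u a)) <= sqrt (vsq n (vsub (u t) (u a)) + eta)).
        { rewrite vnorm_vsq. apply sqrt_le_1_alt. lra. }
        assert (Hsp : 0 < sqrt (vsq n (vsub (u t) (u a)) + eta)) by (apply sqrt_lt_R0; apply Hpos).
        assert (ip n (vsub (u t) (u a)) (d t) / sqrt (vsq n (vsub (u t) (u a)) + eta) <= vnorm n (d t)).
        { unfold Rdiv. apply Rmult_le_reg_r with (sqrt (vsq n (vsub (u t) (u a)) + eta)); auto.
          rewrite Rmult_assoc, Rinv_l by lra. nra. }
        lra. }
    unfold psi in Hps. rewrite vsub_self in Hps.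
    assert (vsq n vzero = 0). { rewrite <- vnorm_sq, vnorm_zero. ring. }
    rewrite H in Hps. rewrite Rplus_0_l in Hps.
    assert (vnorm n (vsub (u b) (u a)) <= sqrt (vsq n (vsub (u b) (u a)) + eta)).
    { rewrite vnorm_vsq. apply sqrt_le_1_alt. lra. }
    lra. }
  apply Rnot_lt_le. intros Hc.
  set (g := vnorm n (vsub (u b) (u a)) - (M b - M a)).
  assert (0 < g) by (unfold g; lra).
  specialize (Key ((g/2)^2) ltac:(nra)). rewrite sqrt_pow2 in Key by lra. unfold g in *. lra.
Qed.

Lemma rcont_lin c a b : rcont (fun t => c * t) a b.
Proof.
  intros t Ht e He. exists (e / (Rabs c + 1)). split.
  apply Rdiv_lt_0_compat; auto. pose proof (Rabs_pos c); lra.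
  intros s Hs Hst. replace (c * s - c * t) with (c * (s - t)) by ring. rewrite Rabs_mult.
  pose proof (Rabs_pos c). pose proof (Rabs_pos (s - t)).
  apply Rle_lt_trans with ((Rabs c + 1) * Rabs (s - t)). nra.
  apply Rmult_lt_reg_l with (/ (Rabs c + 1)). apply Rinv_0_lt_compat; lra.
  rewrite <- Rmult_assoc, Rinv_l by lra. lra.
Qed.

Lemma mvi n (u : R -> nat -> Cx) (d : R -> nat -> Cx) c a b :
  a <= b -> cont_on n u a b ->
  (forall t, a < t < b -> deriv_at n u t (d t)) ->
  (forall t, a < t < b -> vnorm n (d t) <= c) ->
  vnorm n (vsub (u b) (u a)) <= c * (b - a).
Proof.
  intros. replace (c * (b - a)) with (c * b - c * a) by ring.
  apply (mvi_gen n u d (fun t => c * t) (fun _ => c)); auto.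
  apply rcont_lin. intros t Ht.
  apply derivable_pt_lim_ext with (f := mult_real_fct c id). intros; reflexivity.
  replace c with (c * 1) at 2 by ring.
  apply (derivable_pt_lim_scal id). apply derivable_pt_lim_id.
Qed.

Lemma cont_on_sub n u a b a' b' : a <= a' -> b' <= b -> cont_on n u a b -> cont_on n u a' b'.
Proof.
  intros H1 H2 H t Ht e He. destruct (H t ltac:(lra) e He) as [d [Hd Hd']].
  exists d; split; auto. intros s Hs Hst. apply Hd'; auto. lra.
Qed.

Lemma rcont_of_cont f a b : (forall t, continuity_pt f t) -> rcont f a b.
Proof.
  intros H t Ht e He. destruct (H t e He) as [d [Hd Hd']]. exists d. split; auto.
  intros s Hs Hst. destruct (Req_dec s t). subst. rewrite Rminus_diag, Rabs_R0; lra.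
  apply (Hd' s). split. split. exact I. auto. auto.
Qed.

Lemma sin_bounds x : 0 <= x -> - x <= sin x <= x.
Proof.
  intros Hx. destruct (Req_dec x 0). subst. rewrite sin_0; lra.
  split.
  - assert (- sin x - x <= - sin 0 - 0).
    { apply (rmvt_nonpos (fun t => - sin t - t) (fun t => - cos t - 1) 0 x). lra.
      apply rcont_of_cont. intros; apply continuity_pt_minus. apply continuity_pt_opp. apply continuity_sin. apply derivable_continuous_pt; apply derivable_pt_id.
      intros. apply derivable_pt_lim_minus. apply derivable_pt_lim_opp. apply derivable_pt_lim_sin. apply derivable_pt_lim_id.
      intros. pose proof (COS_bound t). lra. }
    rewrite sin_0 in H0. lra.
  - assert (sin x - x <= sin 0 - 0).
    { apply (rmvt_nonpos (fun t => sin t - t) (fun t => cos t - 1) 0 x). lra.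
      apply rcont_of_cont. intros; apply continuity_pt_minus. apply continuity_sin. apply derivable_continuous_pt; apply derivable_pt_id.
      intros. apply derivable_pt_lim_minus. apply derivable_pt_lim_sin. apply derivable_pt_lim_id.
      intros. pose proof (COS_bound t). lra. }
    rewrite sin_0 in H0. lra.
Qed.

Lemma Rabs_sin_le x : Rabs (sin x) <= Rabs x.
Proof.
  destruct (Rle_dec 0 x).
  - rewrite (Rabs_pos_eq x) by auto. apply Rabs_le. apply sin_bounds; auto.
  - rewrite (Rabs_left x) by lra. rewrite <- Rabs_Ropp, <- sin_neg. apply Rabs_le. apply sin_bounds; lra.
Qed.

Lemma Cexpi_sub_le a b : Cnorm (Csub (Cexpi a) (Cexpi b)) <= Rabs (a - b).
Proof.
  unfold Cnorm, Csub, Cexpi; cbn [fst snd].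
  rewrite <- (sqrt_pow2 (Rabs (a - b))) by apply Rabs_pos. apply sqrt_le_1_alt.
  assert (E : (cos a - cos b) ^ 2 + (sin a - sin b) ^ 2 = 2 - 2 * cos (a - b)).
  { rewrite cos_minus. pose proof (sin2_cos2 a). pose proof (sin2_cos2 b). unfold Rsqr in *. nra. }
  rewrite E. replace (a - b) with (2 * ((a - b) / 2)) at 1 by field. rewrite cos_2a_sin.
  pose proof (Rabs_sin_le ((a - b) / 2)).
  assert (Rabs (sin ((a-b)/2)) ^ 2 <= Rabs ((a-b)/2) ^ 2).
  { apply pow_incr. split; auto. apply Rabs_pos. }
  rewrite !pow2_abs in H0. rewrite pow2_abs. nra.
Qed.

Lemma Cnorm_mul z w : Cnorm (Cmul z w) = Cnorm z * Cnorm w.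
Proof.
  unfold Cnorm, Cmul; simpl. rewrite <- sqrt_mult by nra. f_equal. ring.
Qed.

Lemma Cnorm_expi a : Cnorm (Cexpi a) = 1.
Proof. unfold Cnorm, Cexpi; cbn [fst snd]. pose proof (sin2_cos2 a). unfold Rsqr in H.
  replace (cos a ^ 2 + sin a ^ 2) with 1 by nra. apply sqrt_1. Qed.

Lemma Cnorm_expi_mul a z : Cnorm (Cmul (Cexpi a) z) = Cnorm z.
Proof. rewrite Cnorm_mul, Cnorm_expi; ring. Qed.

Lemma vnorm_pointwise n u v c : 0 <= c -> (forall j, (j < n)%nat -> Cnorm (u j) <= c * Cnorm (v j)) ->
  vnorm n u <= c * vnorm n v.
Proof.
  intros Hc H. unfold vnorm. rewrite <- (sqrt_pow2 c) at 1 by auto. rewrite <- sqrt_mult.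
  apply sqrt_le_1_alt. rewrite <- sumR_scal. apply sumR_le. intros j Hj.
  pose proof (H j Hj). pose proof (Cnorm_nonneg (u j)). pose proof (Cnorm_nonneg (v j)).
  replace (c ^ 2 * Cnorm (v j) ^ 2) with ((c * Cnorm (v j)) ^ 2) by ring.
  apply pow_incr; auto. nra. apply sumR_nonneg; intros; nra.
Qed.

Lemma vnorm_Phi n Lam t v : vnorm n (PhiL Lam t v) = vnorm n v.
Proof. unfold vnorm, PhiL. f_equal. apply sumR_ext. intros. rewrite Cnorm_expi_mul. auto. Qed.

Lemma Phi_sub Lam t u v : vsub (PhiL Lam t u) (PhiL Lam t v) = PhiL Lam t (vsub u v).
Proof.
  apply functional_extensionality; intro j. unfold vsub, PhiL, Csub, Cmul, Cexpi; simpl. f_equal; ring.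
Qed.

Lemma Phi_inv Lam t v : PhiL Lam (- t) (PhiL Lam t v) = v.
Proof.
  apply functional_extensionality; intro j. unfold PhiL, Cmul, Cexpi; simpl.
  replace (Lam j * - t) with (- (Lam j * t)) by ring. rewrite cos_neg, sin_neg.
  pose proof (sin2_cos2 (Lam j * t)). unfold Rsqr in H. destruct (v j) as [x y]; simpl.
  set (c := cos (Lam j * t)) in *. set (s := sin (Lam j * t)) in *.
  assert (Hc : c * c = 1 - s * s) by lra.
  f_equal; ring_simplify; rewrite ?Hc; try ring;
  replace (c ^ 2) with (1 - s * s) by (rewrite <- Hc; ring); ring.
Qed.

Lemma Phi_inv' Lam t v : PhiL Lam t (PhiL Lam (- t) v) = v.
Proof. rewrite <- (Ropp_involutive t) at 1. apply Phi_inv. Qed.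

Definition Lsum (n : nat) (Lam : nat -> R) : R := sumR n (fun j => Rabs (Lam j)).

Lemma Lsum_nonneg n Lam : 0 <= Lsum n Lam.
Proof. apply sumR_nonneg. intros; apply Rabs_pos. Qed.

Lemma Lam_le_Lsum n Lam j : (j < n)%nat -> Rabs (Lam j) <= Lsum n Lam.
Proof. intros. apply (sumR_single_le n (fun j => Rabs (Lam j))); auto. intros; apply Rabs_pos. Qed.

Lemma Phi_time_lip n Lam s t x :
  vnorm n (vsub (PhiL Lam s x) (PhiL Lam t x)) <= Lsum n Lam * Rabs (s - t) * vnorm n x.
Proof.
  apply vnorm_pointwise. pose proof (Lsum_nonneg n Lam). pose proof (Rabs_pos (s-t)). nra.
  intros j Hj. unfold vsub, PhiL.
  replace (Csub (Cmul (Cexpi (Lam j * s)) (x j)) (Cmul (Cexpi (Lam j * t)) (x j))) with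
    (Cmul (Csub (Cexpi (Lam j * s)) (Cexpi (Lam j * t))) (x j))
    by (unfold Csub, Cmul; simpl; f_equal; ring).
  rewrite Cnorm_mul. apply Rmult_le_compat_r. apply Cnorm_nonneg.
  eapply Rle_trans. apply Cexpi_sub_le. replace (Lam j * s - Lam j * t) with (Lam j * (s - t)) by ring.
  rewrite Rabs_mult. apply Rmult_le_compat_r. apply Rabs_pos. apply Lam_le_Lsum; auto.
Qed.

Lemma Phi_near_id n Lam tau x d : 0 <= d ->
  (forall j, (j < n)%nat -> Cnorm (Csub (Cexpi (Lam j * tau)) (1, 0)) <= d) ->
  vnorm n (vsub (PhiL Lam tau x) x) <= d * vnorm n x.
Proof.
  intros Hd H. apply vnorm_pointwise; auto. intros j Hj. unfold vsub, PhiL.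
  replace (Csub (Cmul (Cexpi (Lam j * tau)) (x j)) (x j)) with
    (Cmul (Csub (Cexpi (Lam j * tau)) (1, 0)) (x j))
    by (unfold Csub, Cmul; destruct (x j); simpl; f_equal; ring).
  rewrite Cnorm_mul. apply Rmult_le_compat_r. apply Cnorm_nonneg. auto.
Qed.

Lemma Cexpi_neg_sub1 a : Cnorm (Csub (Cexpi (- a)) (1, 0)) = Cnorm (Csub (Cexpi a) (1, 0)).
Proof. unfold Cnorm, Csub, Cexpi; simpl. rewrite cos_neg, sin_neg. f_equal; ring. Qed.

Lemma deriv_cos_lin c t : derivable_pt_lim (fun s => cos (c * s)) t (- c * sin (c * t)).
Proof.
  replace (- c * sin (c * t)) with (- sin (c * t) * c) by ring.
  apply (derivable_pt_lim_comp (fun s => c * s) cos).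
  apply derivable_pt_lim_ext with (f := mult_real_fct c id). intros; reflexivity.
  replace c with (c * 1) at 2 by ring. apply derivable_pt_lim_scal, derivable_pt_lim_id.
  apply derivable_pt_lim_cos.
Qed.

Lemma deriv_sin_lin c t : derivable_pt_lim (fun s => sin (c * s)) t (c * cos (c * t)).
Proof.
  replace (c * cos (c * t)) with (cos (c * t) * c) by ring.
  apply (derivable_pt_lim_comp (fun s => c * s) sin).
  apply derivable_pt_lim_ext with (f := mult_real_fct c id). intros; reflexivity.
  replace c with (c * 1) at 2 by ring. apply derivable_pt_lim_scal, derivable_pt_lim_id.
  apply derivable_pt_lim_sin.
Qed.

Lemma deriv_mul f g df dg t : derivable_pt_lim f t df -> derivable_pt_lim g t dg ->
  derivable_pt_lim (fun s => f s * g s) t (df * g t + f t * dg).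
Proof. intros. apply (derivable_pt_lim_mult f g); auto. Qed.

Lemma deriv_Phi n Lam (v : R -> nat -> Cx) dv t : deriv_at n v t dv ->
  deriv_at n (fun s => PhiL Lam s (v s)) t
    (fun j => Cadd (Cmul (Cexpi (Lam j * t)) (dv j)) (Cmul (0, Lam j) (Cmul (Cexpi (Lam j * t)) (v t j)))).
Proof.
  intros H j Hj. destruct (H j Hj) as [H1 H2]. unfold PhiL, Cmul, Cadd, Cexpi, Cre, Cim in *; simpl in *.
  split.
  - apply derivable_pt_lim_ext with
      (f := fun s => cos (Lam j * s) * fst (v s j) - sin (Lam j * s) * snd (v s j)). intros; reflexivity.
    eapply derivable_pt_lim_ext with (f := minus_fct (fun s => cos (Lam j * s) * fst (v s j)) (fun s => sin (Lam j * s) * snd (v s j))).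
    intros; reflexivity.
    match goal with |- derivable_pt_lim _ _ ?l => replace l with
      ((- Lam j * sin (Lam j * t) * fst (v t j) + cos (Lam j * t) * fst (dv j)) -
       (Lam j * cos (Lam j * t) * snd (v t j) + sin (Lam j * t) * snd (dv j))) by ring end.
    apply derivable_pt_lim_minus.
    apply (deriv_mul (fun s => cos (Lam j * s)) (fun s => fst (v s j))); auto using deriv_cos_lin.
    apply (deriv_mul (fun s => sin (Lam j * s)) (fun s => snd (v s j))); auto using deriv_sin_lin.
  - eapply derivable_pt_lim_ext with (f := plus_fct (fun s => cos (Lam j * s) * snd (v s j)) (fun s => sin (Lam j * s) * fst (v s j))).
    intros; unfold plus_fct; ring.
    match goal with |- derivable_pt_lim _ _ ?l => replace l with
      ((- Lam j * sin (Lam j * t) * snd (v t j) + cos (Lam j * t) * snd (dv j)) +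
       (Lam j * cos (Lam j * t) * fst (v t j) + sin (Lam j * t) * fst (dv j))) by ring end.
    apply derivable_pt_lim_plus.
    apply (deriv_mul (fun s => cos (Lam j * s)) (fun s => snd (v s j))); auto using deriv_cos_lin.
    apply (deriv_mul (fun s => sin (Lam j * s)) (fun s => fst (v s j))); auto using deriv_sin_lin.
Qed.

Ltac vring := let j := fresh "j" in apply functional_extensionality; intro j;
  unfold vsub, vadd, vscale, vzero, Csub, Cadd, Cscale, C0, PhiL, Cmul;
  apply injective_projections; simpl; ring.

Lemma finite_min (P : nat -> R -> Prop) N :
  (forall j d d', 0 < d' -> d' <= d -> P j d -> P j d') ->
  (forall j, (j < N)%nat -> exists d, 0 < d /\ P j d) -> exists d, 0 < d /\ forall j, (j < N)%nat -> P j d.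
Proof.
  intros Hm. induction N; intros H.
  - exists 1. split. lra. intros; lia.
  - destruct IHN as [d1 [Hd1 H1]]. intros; apply H; lia.
    destruct (H N ltac:(lia)) as [d2 [Hd2 H2]].
    exists (Rmin d1 d2). split. apply Rmin_pos; auto. intros j Hj.
    destruct (Nat.eq_dec j N). subst. eapply Hm; [apply Rmin_pos; auto|apply Rmin_r|auto].
    eapply Hm; [apply Rmin_pos; auto|apply Rmin_l|apply H1; lia].
Qed.

Lemma finite_max (P : nat -> R -> Prop) N :
  (forall j d d', d <= d' -> P j d -> P j d') ->
  (forall j, (j < N)%nat -> exists d, P j d) -> exists d, 0 <= d /\ forall j, (j < N)%nat -> P j d.
Proof.
  intros Hm. induction N; intros H.
  - exists 0. split. lra. intros; lia.
  - destruct IHN as [d1 [Hd1 H1]]. intros; apply H; lia.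
    destruct (H N ltac:(lia)) as [d2 H2].
    exists (Rmax d1 d2). split. eapply Rle_trans; [apply Hd1|apply Rmax_l]. intros j Hj.
    destruct (Nat.eq_dec j N). subst. eapply Hm; [apply Rmax_r|auto].
    eapply Hm; [apply Rmax_l|apply H1; lia].
Qed.

Lemma cont_on_comp_crit n u a b :
  (forall t, a <= t <= b -> forall j, (j < n)%nat -> forall e, 0 < e -> exists d, 0 < d /\
     forall s, a <= s <= b -> Rabs (s - t) < d ->
       Rabs (fst (u s j) - fst (u t j)) < e /\ Rabs (snd (u s j) - snd (u t j)) < e) ->
  cont_on n u a b.
Proof.
  intros H t Ht e He.
  set (e' := e / (2 * INR n + 1)).
  assert (He' : 0 < e'). { unfold e'. apply Rdiv_lt_0_compat; auto. pose proof (pos_INR n); lra. }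
  destruct (finite_min (fun j d => forall s, a <= s <= b -> Rabs (s - t) < d ->
       Rabs (fst (u s j) - fst (u t j)) < e' /\ Rabs (snd (u s j) - snd (u t j)) < e') n) as [d [Hd Hd']].
  { intros j d d' Hd' Hle HP s Hs Hst. apply HP; auto. lra. }
  { intros j Hj. apply H; auto. }
  exists d. split; auto. intros s Hs Hst.
  eapply Rle_lt_trans. apply (vnorm_le_comp2 n _ e').
  intros j Hj. destruct (Hd' j Hj s Hs Hst). unfold vsub, Csub; simpl. lra.
  unfold e'. pose proof (pos_INR n).
  replace (2 * INR n * (e / (2 * INR n + 1))) with (e * (2 * INR n / (2 * INR n + 1))) by (field; lra).
  assert (2 * INR n / (2 * INR n + 1) < 1). { apply Rmult_lt_reg_r with (2 * INR n + 1). lra.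
    unfold Rdiv. rewrite Rmult_assoc, Rinv_l by lra. lra. }
  nra.
Qed.

Lemma deriv_cont n u d a b : (forall t, a <= t <= b -> deriv_at n u t (d t)) -> cont_on n u a b.
Proof.
  intros H. apply cont_on_comp_crit. intros t Ht j Hj e He.
  destruct (H t Ht j Hj) as [H1 H2].
  assert (C1 : continuity_pt (fun s => fst (u s j)) t).
  { apply derivable_continuous_pt. exists (Cre (d t j)). apply H1. }
  assert (C2 : continuity_pt (fun s => snd (u s j)) t).
  { apply derivable_continuous_pt. exists (Cim (d t j)). apply H2. }
  destruct (C1 e He) as [d1 [Hd1 Hd1']]. destruct (C2 e He) as [d2 [Hd2 Hd2']].
  exists (Rmin d1 d2). split. apply Rmin_pos; auto. intros s Hs Hst.
  destruct (Req_dec s t). subst. rewrite !Rminus_diag, Rabs_R0. lra.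
  split; [apply (Hd1' s)|apply (Hd2' s)]; (split; [split; [exact I|auto]|]);
  simpl; unfold R_dist; eapply Rlt_le_trans; try apply Hst; [apply Rmin_l|apply Rmin_r].
Qed.

Lemma cont_on_vsub n u v a b : cont_on n u a b -> cont_on n v a b -> cont_on n (fun t => vsub (u t) (v t)) a b.
Proof.
  intros Hu Hv t Ht e He. destruct (Hu t Ht (e/2)) as [d1 [Hd1 H1]]; [lra|].
  destruct (Hv t Ht (e/2)) as [d2 [Hd2 H2]]; [lra|].
  exists (Rmin d1 d2). split. apply Rmin_pos; auto. intros s Hs Hst.
  replace (vsub (vsub (u s) (v s)) (vsub (u t) (v t))) with (vadd (vsub (u s) (u t)) (vscale (-1) (vsub (v s) (v t)))) by vring.
  eapply Rle_lt_trans. apply vnorm_add. rewrite vnorm_scale.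
  rewrite Rabs_left by lra.
  assert (vnorm n (vsub (u s) (u t)) < e/2) by (apply H1; auto; eapply Rlt_le_trans; [apply Hst|apply Rmin_l]).
  assert (vnorm n (vsub (v s) (v t)) < e/2) by (apply H2; auto; eapply Rlt_le_trans; [apply Hst|apply Rmin_r]).
  lra.
Qed.

Lemma cont_on_vscale n c u a b : cont_on n u a b -> cont_on n (fun t => vscale c (u t)) a b.
Proof.
  intros Hu t Ht e He. destruct (Hu t Ht (e / (Rabs c + 1))) as [d [Hd H]].
  apply Rdiv_lt_0_compat; auto. pose proof (Rabs_pos c); lra.
  exists d. split; auto. intros s Hs Hst.
  replace (vsub (vscale c (u s)) (vscale c (u t))) with (vscale c (vsub (u s) (u t))) by vring.
  rewrite vnorm_scale. specialize (H s Hs Hst). pose proof (Rabs_pos c).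
  pose proof (vnorm_nonneg n (vsub (u s) (u t))).
  apply Rle_lt_trans with ((Rabs c + 1) * vnorm n (vsub (u s) (u t))). nra.
  apply Rmult_lt_reg_l with (/ (Rabs c + 1)). apply Rinv_0_lt_compat; lra.
  rewrite <- Rmult_assoc, Rinv_l by lra. lra.
Qed.

Lemma cont_on_lin n w a b : cont_on n (fun t => vscale t w) a b.
Proof.
  intros t Ht e He. exists (e / (vnorm n w + 1)). split.
  apply Rdiv_lt_0_compat; auto. pose proof (vnorm_nonneg n w); lra.
  intros s Hs Hst. replace (vsub (vscale s w) (vscale t w)) with (vscale (s - t) w) by vring.
  rewrite vnorm_scale. pose proof (vnorm_nonneg n w). pose proof (Rabs_pos (s - t)).
  apply Rle_lt_trans with (Rabs (s - t) * (vnorm n w + 1)). nra.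
  apply Rmult_lt_reg_r with (/ (vnorm n w + 1)). apply Rinv_0_lt_compat; lra.
  rewrite Rmult_assoc, Rinv_r by lra. lra.
Qed.

Lemma deriv_vsub n u v du dv t : deriv_at n u t du -> deriv_at n v t dv ->
  deriv_at n (fun s => vsub (u s) (v s)) t (vsub du dv).
Proof.
  intros Hu Hv j Hj. destruct (Hu j Hj), (Hv j Hj). unfold vsub, Csub, Cre, Cim in *; simpl.
  split; apply (derivable_pt_lim_minus (fun s => fst (u s j)) (fun s => fst (v s j))) ||
              apply (derivable_pt_lim_minus (fun s => snd (u s j)) (fun s => snd (v s j))); auto.
Qed.

Lemma deriv_vscale n c u du t : deriv_at n u t du -> deriv_at n (fun s => vscale c (u s)) t (vscale c du).
Proof.
  intros Hu j Hj. destruct (Hu j Hj). unfold vscale, Cscale, Cre, Cim in *; simpl.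
  split; [apply (derivable_pt_lim_scal (fun s => fst (u s j))) | apply (derivable_pt_lim_scal (fun s => snd (u s j)))]; auto.
Qed.

Lemma deriv_lin n w t : deriv_at n (fun s => vscale s w) t w.
Proof.
  intros j Hj. unfold vscale, Cscale, Cre, Cim; simpl.
  split.
  - apply derivable_pt_lim_ext with (f := mult_real_fct (fst (w j)) id). intros; unfold mult_real_fct, id; ring.
    replace (fst (w j)) with (fst (w j) * 1) at 2 by ring. apply derivable_pt_lim_scal, derivable_pt_lim_id.
  - apply derivable_pt_lim_ext with (f := mult_real_fct (snd (w j)) id). intros; unfold mult_real_fct, id; ring.
    replace (snd (w j)) with (snd (w j) * 1) at 2 by ring. apply derivable_pt_lim_scal, derivable_pt_lim_id.
Qed.

Lemma cont_on_refl n u a b : cont_on n u a b -> cont_on n (fun s => u (- s)) (- b) (- a).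
Proof.
  intros H t Ht e He. destruct (H (- t) ltac:(lra) e He) as [d [Hd H']].
  exists d. split; auto. intros s Hs Hst. apply H'. lra.
  replace (- s - - t) with (- (s - t)) by ring. rewrite Rabs_Ropp. auto.
Qed.

Lemma deriv_refl n u d t : deriv_at n u (- t) d -> deriv_at n (fun s => u (- s)) t (vscale (-1) d).
Proof.
  intros H j Hj. destruct (H j Hj) as [H1 H2]. unfold vscale, Cscale, Cre, Cim in *; simpl.
  split.
  - replace (-1 * fst (d j)) with (fst (d j) * -1) by ring.
    apply (derivable_pt_lim_comp Ropp (fun s => fst (u s j))).
    apply derivable_pt_lim_ext with (f := (- id)%F). intros; reflexivity.
    apply derivable_pt_lim_opp, derivable_pt_lim_id. auto.
  - replace (-1 * snd (d j)) with (snd (d j) * -1) by ring.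
    apply (derivable_pt_lim_comp Ropp (fun s => snd (u s j))).
    apply derivable_pt_lim_ext with (f := (- id)%F). intros; reflexivity.
    apply derivable_pt_lim_opp, derivable_pt_lim_id. auto.
Qed.

Lemma stay_bounded n (X : R -> R) (u d : R -> nat -> Cx) c T Rad :
  (forall r s, 0 <= r -> r <= s -> X r <= X s) ->
  0 <= X (2 * Rad) -> 0 <= c -> 0 <= T -> 0 < Rad -> cont_on n u 0 T ->
  (forall t, 0 < t < T -> deriv_at n u t (d t)) ->
  (forall t, 0 < t < T -> vnorm n (d t) <= c * X (vnorm n (u t))) ->
  vnorm n (u 0) <= Rad -> c * T * X (2 * Rad) <= Rad ->
  forall t, 0 <= t <= T -> vnorm n (u t) <= 2 * Rad.
Proof.
  intros Hmono HX0 Hc HT HR Hcont Hder Hdb Hu0 HcT.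
  set (S := fun s => 0 <= s <= T /\ forall t, 0 <= t <= s -> vnorm n (u t) <= 2 * Rad).
  assert (Hgrow : forall s, S s -> forall t, 0 <= t <= s -> vnorm n (u t) <= Rad + c * X (2 * Rad) * t).
  { intros s [Hs Hs'] t Ht.
    assert (vnorm n (vsub (u t) (u 0)) <= c * X (2 * Rad) * (t - 0)).
    { apply (mvi n u d). lra. apply (cont_on_sub n u 0 T); auto; lra.
      intros; apply Hder; lra.
      intros tau Htau. eapply Rle_trans. apply Hdb. lra. apply Rmult_le_compat_l; auto.
      apply Hmono. apply vnorm_nonneg. apply Hs'. lra. }
    pose proof (vnorm_tri n (u t) (u 0) vzero). 
    replace (vsub (u t) vzero) with (u t) in H0 by (apply functional_extensionality; intro j; unfold vsub, vzero, Csub, C0; destruct (u t j); simpl; f_equal; ring).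
    replace (vsub (u 0) vzero) with (u 0) in H0 by (apply functional_extensionality; intro j; unfold vsub, vzero, Csub, C0; destruct (u 0 j); simpl; f_equal; ring).
    lra. }
  assert (HS0 : S 0).
  { split. lra. intros t Ht. replace t with 0 by lra. lra. }
  assert (Hb : bound S). { exists T. intros x [Hx _]. lra. }
  destruct (completeness S Hb (ex_intro _ 0 HS0)) as [sig [Hub Hlub]].
  assert (Hsig0 : 0 <= sig) by (apply Hub; auto).
  assert (HsigT : sig <= T). { apply Hlub. intros x [Hx _]. lra. }
  assert (HA : forall t, 0 <= t < sig -> vnorm n (u t) <= 2 * Rad).
  { intros t Ht. destruct (classic (exists s, S s /\ t < s)) as [[s [Hs Hts]]|Hno].
    - destruct Hs as [_ Hs]. apply Hs. lra.
    - exfalso. assert (sig <= t). { apply Hlub. intros x Hx. apply Rnot_lt_le. intro. apply Hno. eauto. } lra. }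
  assert (HB : vnorm n (u sig) <= 2 * Rad).
  { destruct (Req_dec sig 0) as [->|Hne]. lra.
    apply Rnot_lt_le. intro Hgt.
    destruct (Hcont sig ltac:(lra) (vnorm n (u sig) - 2 * Rad) ltac:(lra)) as [dd [Hdd Hdd']].
    set (t := Rmax 0 (sig - dd / 2)).
    assert (Ht0 : 0 <= t) by apply Rmax_l.
    assert (Htlt : t < sig) by (unfold t, Rmax; destruct Rle_dec; lra).
    assert (Htd : Rabs (t - sig) < dd) by (unfold t, Rmax; destruct Rle_dec; apply Rabs_def1; lra).
    specialize (Hdd' t ltac:(lra) Htd). pose proof (HA t ltac:(lra)).
    pose proof (vnorm_rev_tri n (u sig) (u t)). rewrite vnorm_sub_sym in Hdd'.
    apply abs_le_split in H0. lra. }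
  assert (HSsig : S sig).
  { split. lra. intros t Ht. destruct (Req_dec t sig). subst; auto. apply HA; lra. }
  destruct (Req_dec sig T) as [HeqT|Hlt].
  - subst sig. intros t Ht. destruct HSsig as [_ HH]. apply HH; auto.
  - exfalso. assert (Hlt' : sig < T) by lra.
    assert (Hstrict : vnorm n (u sig) < 2 * Rad).
    { pose proof (Hgrow sig HSsig sig ltac:(lra)).
      assert (0 <= c * X (2 * Rad)) by (apply Rmult_le_pos; auto).
      assert (c * X (2 * Rad) * sig < Rad).
      { destruct (Req_dec (c * X (2 * Rad)) 0) as [E|E]. rewrite E. lra.
        apply Rlt_le_trans with (c * X (2 * Rad) * T). 
        apply Rmult_lt_compat_l; lra. replace (c * X (2 * Rad) * T) with (c * T * X (2 * Rad)) by ring. lra. }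
      lra. }
    destruct (Hcont sig ltac:(lra) (2 * Rad - vnorm n (u sig)) ltac:(lra)) as [dd [Hdd Hdd']].
    set (s' := Rmin (sig + dd / 2) T).
    assert (Hs'S : S s').
    { split. unfold s', Rmin; destruct Rle_dec; lra.
      intros t Ht. destruct (Rle_dec t sig). destruct HSsig as [_ HH]; apply HH; lra.
      assert (Htd : Rabs (t - sig) < dd) by (unfold s', Rmin in Ht; destruct Rle_dec; apply Rabs_def1; lra).
      assert (t <= T) by (unfold s', Rmin in Ht; destruct Rle_dec; lra).
      specialize (Hdd' t ltac:(lra) Htd). pose proof (vnorm_rev_tri n (u t) (u sig)).
      apply abs_le_split in H0. lra. }
    pose proof (Hub s' Hs'S). unfold s', Rmin in H; destruct Rle_dec; lra.
Qed.

Lemma exists_nat_gt x : exists N : nat, x < INR N.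
Proof.
  destruct (archimed x) as [H1 _]. destruct (Z_le_gt_dec (up x) 0).
  - exists 0%nat. simpl. apply IZR_le in l. lra.
  - exists (Z.to_nat (up x)). rewrite INR_IZR_INZ, Z2Nat.id by lia. lra.
Qed.

Lemma node_cover N H t : (0 < N)%nat -> 0 < H -> 0 <= t <= INR N * H ->
  exists k, (k < N)%nat /\ INR k * H <= t <= (INR k + 1) * H.
Proof.
  intros HN HH. induction N as [|N IH]. lia.
  intros Ht. destruct (Nat.eq_dec N 0).
  - subst. exists 0%nat. simpl in *. split. lia. lra.
  - rewrite S_INR in Ht. destruct (Rle_dec t (INR N * H)).
    + destruct IH as [k [Hk Hk']]. lia. lra. exists k. split. lia. auto.
    + exists N. split. lia. lra.
Qed.

Lemma gronwall_disc (e : nat -> R) q r N : 0 <= q -> 0 <= r -> e 0%nat <= 0 ->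
  (forall k, (k < N)%nat -> e (S k) <= (1 + q) * e k + r) ->
  forall k, (k <= N)%nat -> e k <= INR k * r * (1 + q) ^ k.
Proof.
  intros Hq Hr H0 Hs. induction k; intros Hk.
  - simpl. lra.
  - rewrite S_INR. specialize (IHk ltac:(lia)). specialize (Hs k ltac:(lia)).
    assert (1 <= (1 + q) ^ S k) by (apply pow_R1_Rle; lra).
    assert (0 <= INR k) by apply pos_INR.
    simpl. simpl in H. assert (0 <= (1+q)^k) by (apply pow_le; lra).
    nra.
Qed.

Lemma pow_le_exp q N : 0 <= q -> (1 + q) ^ N <= exp (q * INR N).
Proof.
  intros Hq. induction N.
  - simpl. rewrite Rmult_0_r, exp_0. lra.
  - rewrite S_INR. replace (q * (INR N + 1)) with (q * INR N + q) by ring. rewrite exp_plus.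
    simpl. assert (1 + q <= exp q).
    { destruct (Req_dec q 0). subst. rewrite exp_0. lra. left. apply exp_ineq1. auto. }
    assert (0 <= (1+q)^N) by (apply pow_le; lra).
    rewrite Rmult_comm. apply Rmult_le_compat; auto; lra.
Qed.

Lemma mean_nodes n (G : R -> nat -> Cx) (W : nat -> Cx) e' T0 H :
  (forall j, (j < n)%nat -> G 0 j = C0) -> 0 <= T0 -> T0 < H -> 0 <= e' ->
  (forall T, T0 < T -> vnorm n (vsub (vscale (/ T) (G T)) W) <= e') ->
  forall q : nat, vnorm n (vsub (G (INR q * H)) (vscale (INR q * H) W)) <= INR q * H * e'.
Proof.
  intros HG0 HT0 HH He' Hm q. destruct q.
  - simpl. rewrite Rmult_0_l. rewrite (vnorm_ext n _ vzero). rewrite vnorm_zero; lra.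
    intros j Hj. unfold vsub. rewrite HG0 by auto. unfold vscale, Cscale, vzero, Csub, C0; simpl. f_equal; ring.
  - set (T := INR (S q) * H). assert (HT : T0 < T).
    { unfold T. rewrite S_INR. pose proof (pos_INR q). nra. }
    replace (vsub (G T) (vscale T W)) with (vscale T (vsub (vscale (/ T) (G T)) W)).
    rewrite vnorm_scale. rewrite Rabs_pos_eq by lra. apply Rmult_le_compat_l. lra. auto.
    apply functional_extensionality; intro j. unfold vsub, vscale, Csub, Cscale.
    apply injective_projections; simpl; field; lra.
Qed.

Lemma vnorm_add3 n x y z : vnorm n (vadd (vadd x y) z) <= vnorm n x + vnorm n y + vnorm n z.
Proof.
  eapply Rle_trans. apply vnorm_add. pose proof (vnorm_add n x y). lra.
Qed.

Section AvgCore.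
Variables (n : nat) (F : R -> (nat -> Cx) -> nat -> Cx) (b W : R -> nat -> Cx) (K Rad th : R).
Hypotheses (HK : 0 < K) (Hth : 0 < th) (HR : 0 < Rad)
  (HFb : forall t x, vnorm n x <= 2 * Rad -> vnorm n (F t x) <= K)
  (HFl : forall t x y, vnorm n x <= 2 * Rad -> vnorm n y <= 2 * Rad ->
           vnorm n (vsub (F t x) (F t y)) <= K * vnorm n (vsub x y))
  (Hbc : cont_on n b 0 th)
  (Hbd : forall tau, 0 < tau < th -> deriv_at n b tau (W tau))
  (Hbb : forall tau, 0 <= tau <= th -> vnorm n (b tau) <= 2 * Rad)
  (HWb : forall tau, 0 <= tau < th -> vnorm n (W tau) <= K)
  (HWl : forall tau sig, 0 <= tau < th -> 0 <= sig < th ->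
           vnorm n (vsub (W tau) (W sig)) <= K * vnorm n (vsub (b tau) (b sig)))
  (Hmean : forall tau, 0 <= tau < th -> exists G : R -> nat -> Cx,
      (forall j, (j < n)%nat -> G 0 j = C0) /\ (forall t, deriv_at n G t (F t (b tau))) /\
      (forall e, 0 < e -> exists T0, forall T, T0 < T -> vnorm n (vsub (vscale (/ T) (G T)) (W tau)) <= e)).

Lemma b_lip : forall sig tau, 0 <= sig <= tau -> tau <= th -> vnorm n (vsub (b tau) (b sig)) <= K * (tau - sig).
Proof.
  intros sig tau Hs Ht. apply (mvi n b W). lra. apply (cont_on_sub n b 0 th); auto; lra.
  intros; apply Hbd; lra. intros; apply HWb; lra.
Qed.

Lemma avg_core : forall eta, 0 < eta -> exists delta, 0 < delta /\ forall eps, 0 < eps < delta ->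
    forall a : R -> nat -> Cx, cont_on n a 0 (th / eps) ->
    (forall t, 0 < t < th / eps -> deriv_at n a t (vscale eps (F t (a t)))) ->
    (forall t, 0 <= t <= th / eps -> vnorm n (a t) <= 2 * Rad) ->
    vnorm n (vsub (a 0) (b 0)) = 0 ->
    forall t, 0 <= t <= th / eps -> vnorm n (vsub (a t) (b (eps * t))) <= eta.
Proof.
  intros eta Heta.
  set (E := exp (K * th)).
  assert (HE : 0 < E) by apply exp_pos.
  destruct (exists_nat_gt (Rmax 1 ((4 * K * th + 4 * th * E * K ^ 2 * th) / eta))) as [N HN].
  assert (HN1 : 1 < INR N) by (eapply Rle_lt_trans; [apply Rmax_l|apply HN]).
  assert (HN2 : (4 * K * th + 4 * th * E * K ^ 2 * th) / eta < INR N) by (eapply Rle_lt_trans; [apply Rmax_r|apply HN]).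
  assert (HN0 : (0 < N)%nat) by (apply INR_lt; simpl; lra).
  set (h := th / INR N).
  assert (Hh : 0 < h) by (unfold h; apply Rdiv_lt_0_compat; lra).
  assert (HNh : INR N * h = th) by (unfold h; field; lra).
  set (e' := eta / (4 * INR N * th * E)).
  assert (He' : 0 < e') by (unfold e'; apply Rdiv_lt_0_compat; auto; repeat apply Rmult_lt_0_compat; lra).
  destruct (finite_max (fun k T0 => exists G : R -> nat -> Cx,
      (forall j, (j < n)%nat -> G 0 j = C0) /\ (forall t, deriv_at n G t (F t (b (INR k * h)))) /\
      (forall T, T0 < T -> vnorm n (vsub (vscale (/ T) (G T)) (W (INR k * h))) <= e')) N) as [T0 [HT0 HT0']].
  { intros j d d' Hdd [G [G1 [G2 G3]]]. exists G. split; auto. split; auto. intros T HT. apply G3. lra. }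
  { intros k Hk. assert (Hk' : 0 <= INR k * h < th).
    { split. apply Rmult_le_pos; [apply pos_INR|lra]. rewrite <- HNh. apply Rmult_lt_compat_r; auto. apply lt_INR; auto. }
    destruct (Hmean _ Hk') as [G [G1 [G2 G3]]]. destruct (G3 e' He') as [T1 HT1].
    exists T1, G. auto. }
  exists (h / (T0 + 1)). split. apply Rdiv_lt_0_compat; lra.
  intros eps [Heps Hepsd] a Hac Had Hab Ha0.
  set (H := h / eps).
  assert (HH : T0 < H).
  { unfold H. apply Rlt_le_trans with (T0 + 1). lra.
    apply Rmult_le_reg_r with (eps / (T0 + 1)). apply Rdiv_lt_0_compat; lra.
    replace (h / eps * (eps / (T0 + 1))) with (h / (T0 + 1)) by (field; lra).
    replace ((T0 + 1) * (eps / (T0 + 1))) with eps by (field; lra). lra. }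
  assert (HHp : 0 < H) by lra.
  assert (HthH : th / eps = INR N * H) by (unfold H; rewrite <- HNh; field; lra).
  assert (Hepsh : eps * H = h) by (unfold H; field; lra).
  assert (a_lip : forall s t, 0 <= s <= t -> t <= th / eps -> vnorm n (vsub (a t) (a s)) <= eps * K * (t - s)).
  { intros s t Hs Ht. apply (mvi n a (fun t => vscale eps (F t (a t)))). lra.
    apply (cont_on_sub n a 0 (th / eps)); auto; lra.
    intros; apply Had; lra. intros tau Htau. rewrite vnorm_scale, Rabs_pos_eq by lra.
    apply Rmult_le_compat_l. lra. apply HFb. apply Hab; lra. }
  set (ek := fun k : nat => vnorm n (vsub (a (INR k * H)) (b (INR k * h)))).
  set (c := 2 * K ^ 2 * h + 2 * INR N * e').
  assert (Hstep : forall k, (k < N)%nat -> ek (S k) <= (1 + K * h) * ek k + h * c).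
  { intros k Hk.
    assert (Hkr : INR k + 1 <= INR N) by (rewrite <- S_INR; apply le_INR; lia).
    assert (Hk0 : 0 <= INR k) by apply pos_INR.
    set (t0 := INR k * H). set (t1 := (INR k + 1) * H).
    set (s0 := INR k * h). set (s1 := (INR k + 1) * h).
    assert (Hs1 : s1 <= th) by (unfold s1; rewrite <- HNh; apply Rmult_le_compat_r; lra).
    assert (Ht1 : t1 <= th / eps) by (unfold t1; rewrite HthH; apply Rmult_le_compat_r; lra).
    assert (Hks : 0 <= s0 < th) by (unfold s0; split; [apply Rmult_le_pos; lra|unfold s1 in Hs1; nra]).
    destruct (HT0' k Hk) as [G [G1 [G2 G3]]].
    fold s0 in G2, G3.
    assert (HGc : forall a' b', cont_on n G a' b') by (intros; apply (deriv_cont n G (fun t => F t (b s0))); intros; apply G2).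
    set (D := fun s => vsub (a s) (vscale eps (G s))).
    assert (R1 : vnorm n (vsub (D t1) (D t0)) <= eps * K * (K * h + ek k) * (t1 - t0)).
    { apply (mvi n D (fun s => vsub (vscale eps (F s (a s))) (vscale eps (F s (b s0))))).
      unfold t0, t1; nra.
      apply cont_on_vsub. apply (cont_on_sub n a 0 (th / eps)); auto. unfold t0; nra.
      apply cont_on_vscale; auto.
      intros s Hs. apply deriv_vsub. apply Had. split. unfold t0 in Hs; nra. lra. apply deriv_vscale. apply G2.
      intros s Hs. replace (vsub (vscale eps (F s (a s))) (vscale eps (F s (b s0)))) with
        (vscale eps (vsub (F s (a s)) (F s (b s0)))) by vring.
      rewrite vnorm_scale, Rabs_pos_eq by lra. rewrite Rmult_assoc. apply Rmult_le_compat_l. lra.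
      eapply Rle_trans. apply HFl. apply Hab. split. unfold t0 in Hs; nra. lra. apply Hbb; lra.
      apply Rmult_le_compat_l. lra. eapply Rle_trans. apply (vnorm_tri n _ (a t0)).
      assert (vnorm n (vsub (a s) (a t0)) <= eps * K * (s - t0)) by (apply a_lip; [split|]; unfold t0, t1 in *; nra).
      assert (eps * K * (s - t0) <= K * h).
      { rewrite <- Hepsh. unfold t0, t1 in *.
        assert (0 <= (eps * K) * ((INR k + 1) * H - s)) by (apply Rmult_le_pos; nra). nra. }
      unfold ek. fold t0 s0. lra. }
    assert (R2 : vnorm n (vsub (vscale eps (vsub (G t1) (G t0))) (vscale h (W s0))) <= (2 * INR k + 1) * h * e').
    { pose proof (mean_nodes n G (W s0) e' T0 H G1 HT0 HH ltac:(lra) G3 k) as M0.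
      pose proof (mean_nodes n G (W s0) e' T0 H G1 HT0 HH ltac:(lra) G3 (S k)) as M1.
      rewrite S_INR in M1. fold t0 in M0. fold t1 in M1.
      replace (vsub (vscale eps (vsub (G t1) (G t0))) (vscale h (W s0))) with
        (vscale eps (vadd (vsub (G t1) (vscale t1 (W s0))) (vscale (-1) (vsub (G t0) (vscale t0 (W s0)))))).
      rewrite vnorm_scale, Rabs_pos_eq by lra. eapply Rle_trans. apply Rmult_le_compat_l. lra. apply vnorm_add.
      rewrite vnorm_scale. rewrite Rabs_left by lra.
      replace ((2 * INR k + 1) * h * e') with (eps * ((INR k + 1) * H * e' + INR k * H * e')).
      apply Rmult_le_compat_l. lra. fold t0 t1. unfold t0, t1 in *. lra.
      rewrite <- Hepsh. ring.
      apply functional_extensionality; intro j. unfold vsub, vadd, vscale, Csub, Cadd, Cscale.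
      apply injective_projections; simpl; unfold t0, t1; rewrite <- Hepsh; ring. }
    set (Bf := fun tau => vsub (b tau) (vscale tau (W s0))).
    assert (R3 : vnorm n (vsub (Bf s1) (Bf s0)) <= K * K * h * (s1 - s0)).
    { apply (mvi n Bf (fun tau => vsub (W tau) (W s0))). unfold s0, s1; nra.
      apply cont_on_vsub. apply (cont_on_sub n b 0 th); auto; lra. apply cont_on_lin.
      intros tau Htau. apply deriv_vsub. apply Hbd; lra. apply deriv_lin.
      intros tau Htau. eapply Rle_trans. apply HWl; lra. rewrite Rmult_assoc. apply Rmult_le_compat_l. lra.
      eapply Rle_trans. apply b_lip; lra. apply Rmult_le_compat_l. lra. unfold s0, s1 in *. lra. }
    unfold ek. rewrite S_INR. fold t1 s1.
    replace (vsub (a t1) (b s1)) with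
      (vadd (vadd (vadd (vsub (a t0) (b s0)) (vsub (D t1) (D t0)))
        (vsub (vscale eps (vsub (G t1) (G t0))) (vscale h (W s0)))) (vscale (-1) (vsub (Bf s1) (Bf s0)))).
    2:{ apply functional_extensionality; intro j. unfold D, Bf, vsub, vadd, vscale, Csub, Cadd, Cscale.
        apply injective_projections; simpl; unfold s0, s1; ring. }
    eapply Rle_trans. apply vnorm_add. rewrite vnorm_scale, Rabs_left by lra.
    eapply Rle_trans. apply Rplus_le_compat_r. apply vnorm_add3.
    fold ek. replace (vnorm n (vsub (a t0) (b s0))) with (ek k) by reflexivity.
    assert (Ht10 : eps * (t1 - t0) = h) by (unfold t0, t1; rewrite <- Hepsh; ring).
    assert (Hs10 : s1 - s0 = h) by (unfold s0, s1; ring).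
    rewrite Hs10 in R3.
    assert (R1' : vnorm n (vsub (D t1) (D t0)) <= K * h * (K * h + ek k)).
    { replace (K * h * (K * h + ek k)) with (eps * K * (K * h + ek k) * (t1 - t0)). auto.
      replace (eps * K * (K * h + ek k) * (t1 - t0)) with (K * (K * h + ek k) * (eps * (t1 - t0))) by ring.
      rewrite Ht10. ring. }
    assert ((2 * INR k + 1) * h * e' <= 2 * INR N * e' * h).
    { assert (0 <= (2 * INR N - 2 * INR k - 1) * (h * e')) by (apply Rmult_le_pos; nra). nra. }
    unfold c. change (vnorm n (vsub (a (INR k * H)) (b (INR k * h)))) with (ek k). lra. }
  assert (Hgr := gronwall_disc ek (K * h) (h * c) N ltac:(nra) ltac:(unfold c; nra)).
  assert (Hek0 : ek 0%nat <= 0).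
  { unfold ek. simpl. rewrite !Rmult_0_l. lra. }
  specialize (Hgr Hek0 Hstep).
  assert (Hekb : forall k, (k <= N)%nat -> ek k <= th * c * E).
  { intros k Hk. eapply Rle_trans. apply Hgr; auto.
    assert (INR k <= INR N) by (apply le_INR; auto).
    assert ((1 + K * h) ^ k <= (1 + K * h) ^ N) by (apply Rle_pow; [nra|auto]).
    assert ((1 + K * h) ^ N <= E).
    { unfold E. rewrite <- HNh. replace (K * (INR N * h)) with (K * h * INR N) by ring. apply pow_le_exp. nra. }
    assert (0 <= (1 + K * h) ^ k) by (apply pow_le; nra).
    assert (0 <= c) by (unfold c; nra). pose proof (pos_INR k).
    replace (th * c * E) with ((INR N * h) * c * E) by (rewrite HNh; auto).
    assert (0 <= h * c) by nra.
    apply Rmult_le_compat. nra. auto. 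
    assert (0 <= (INR N - INR k) * (h * c)) by (apply Rmult_le_pos; nra). nra. lra. }
  intros t Ht. rewrite HthH in Ht.
  destruct (node_cover N H t HN0 HHp Ht) as [k [Hk Hkt]].
  pose proof (Hekb k ltac:(lia)) as Hek.
  assert (Hk0 : 0 <= INR k) by apply pos_INR.
  assert (Hkr : INR k + 1 <= INR N) by (rewrite <- S_INR; apply le_INR; lia).
  eapply Rle_trans. apply (vnorm_tri n _ (a (INR k * H))).
  eapply Rle_trans. apply Rplus_le_compat_l. apply (vnorm_tri n _ (b (INR k * h))).
  assert (A1 : vnorm n (vsub (a t) (a (INR k * H))) <= K * h).
  { eapply Rle_trans. apply a_lip. split; nra. rewrite HthH. nra.
    rewrite <- Hepsh. replace (eps * K * (t - INR k * H)) with (K * (eps * (t - INR k * H))) by ring.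
    apply Rmult_le_compat_l. lra. nra. }
  assert (A2 : vnorm n (vsub (b (INR k * h)) (b (eps * t))) <= K * h).
  { rewrite vnorm_sub_sym. eapply Rle_trans. apply b_lip. split. nra.
    rewrite <- Hepsh. nra. rewrite <- HNh, <- Hepsh. nra.
    apply Rmult_le_compat_l. lra. rewrite <- Hepsh. nra. }
  fold (ek k).
  assert (Hfin : 2 * K * h + th * c * E <= eta).
  { unfold c, h, e'. 
    assert (Heq : 2 * K * (th / INR N) + th * (2 * K ^ 2 * (th / INR N) + 2 * INR N * (eta / (4 * INR N * th * E))) * E
       = (2 * K * th + 2 * th * E * K ^ 2 * th) / INR N + eta / 2) by (field; repeat split; lra).
    rewrite Heq.
    assert ((2 * K * th + 2 * th * E * K ^ 2 * th) / INR N <= eta / 2).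
    { apply Rmult_le_reg_r with (INR N). lra. unfold Rdiv. rewrite Rmult_assoc, Rinv_l by lra.
      apply Rmult_lt_compat_r with (r := eta) in HN2; auto. unfold Rdiv in HN2.
      rewrite Rmult_assoc, Rinv_l in HN2 by lra. nra. }
    lra. }
  lra.
Qed.

End AvgCore.

Lemma php m : forall f : nat -> nat, (forall i, (i <= m)%nat -> (f i < m)%nat) ->
  exists i1 i2, (i1 < i2 <= m)%nat /\ f i1 = f i2.
Proof.
  induction m; intros f Hf.
  - specialize (Hf 0%nat ltac:(lia)). lia.
  - destruct (classic (exists i, (i <= m)%nat /\ f i = f (S m))) as [[i [Hi Heq]]|Hno].
    + exists i, (S m). split. lia. auto.
    + set (g := fun i => if Nat.ltb (f i) (f (S m)) then f i else (f i - 1)%nat).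
      destruct (IHm g) as [i1 [i2 [Hi Heq]]].
      { intros i Hi. unfold g. pose proof (Hf i ltac:(lia)). pose proof (Hf (S m) ltac:(lia)).
        destruct (Nat.ltb_spec (f i) (f (S m))). lia.
        assert (f i <> f (S m)) by (intro; apply Hno; eauto). lia. }
      exists i1, i2. split. lia.
      unfold g in Heq.
      assert (f i1 <> f (S m)) by (intro; apply Hno; exists i1; split; [lia|auto]).
      assert (f i2 <> f (S m)) by (intro; apply Hno; exists i2; split; [lia|auto]).
      destruct (Nat.ltb_spec (f i1) (f (S m))), (Nat.ltb_spec (f i2) (f (S m))); lia.
Qed.

Fixpoint codeSum (Q n : nat) (d : nat -> nat) : nat :=
  match n with O => O | S k => (codeSum Q k d + d k * Q ^ k)%nat end.

Lemma codeSum_lt Q n d : (forall j, (j < n)%nat -> (d j < Q)%nat) -> (codeSum Q n d < Q ^ n)%nat \/ (n = 0%nat /\ Q = 0%nat).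
Proof.
  intros H. destruct (Nat.eq_dec Q 0). 
  - destruct n. right; auto. specialize (H 0%nat ltac:(lia)). lia.
  - left. induction n; simpl. lia.
    assert (codeSum Q n d < Q ^ n)%nat by (apply IHn; intros; apply H; lia).
    specialize (H n ltac:(lia)).
    assert (d n * Q ^ n <= (Q - 1) * Q ^ n)%nat by (apply Nat.mul_le_mono_r; lia).
    assert ((Q - 1) * Q ^ n + Q ^ n = Q * Q ^ n)%nat. { destruct Q. lia. simpl. rewrite Nat.sub_0_r. lia. }
    lia.
Qed.

Lemma codeSum_inj Q n d d' : (0 < Q)%nat -> (forall j, (j < n)%nat -> (d j < Q)%nat /\ (d' j < Q)%nat) ->
  codeSum Q n d = codeSum Q n d' -> forall j, (j < n)%nat -> d j = d' j.
Proof.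
  intros HQ. induction n; intros H Heq j Hj. lia.
  simpl in Heq.
  assert (A : (codeSum Q n d < Q ^ n)%nat).
  { destruct (codeSum_lt Q n d) as [A|[A B]]. intros; apply H; lia. auto. lia. }
  assert (B : (codeSum Q n d' < Q ^ n)%nat).
  { destruct (codeSum_lt Q n d') as [B|[B C]]. intros; apply H; lia. auto. lia. }
  assert (Hn : d n = d' n).
  { destruct (Nat.lt_trichotomy (d n) (d' n)) as [L|[L|L]]; auto.
    - assert ((d n + 1) * Q ^ n <= d' n * Q ^ n)%nat by (apply Nat.mul_le_mono_r; lia). lia.
    - assert ((d' n + 1) * Q ^ n <= d n * Q ^ n)%nat by (apply Nat.mul_le_mono_r; lia). lia. }
  destruct (Nat.eq_dec j n). subst; auto.
  apply IHn. intros; apply H; lia. rewrite Hn in Heq. lia. lia.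
Qed.

Lemma cexpi_period (m : Z) b : Cexpi (2 * PI * IZR m + b) = Cexpi b.
Proof.
  unfold Cexpi. destruct (Z_le_gt_dec 0 m).
  - rewrite <- (Z2Nat.id m) by auto. rewrite <- INR_IZR_INZ.
    replace (2 * PI * INR (Z.to_nat m) + b) with (b + 2 * INR (Z.to_nat m) * PI) by ring.
    rewrite cos_period, sin_period. auto.
  - replace m with (- Z.of_nat (Z.to_nat (- m)))%Z by lia. rewrite opp_IZR, <- INR_IZR_INZ.
    set (k := Z.to_nat (- m)). 
    replace b with ((2 * PI * - INR k + b) + 2 * INR k * PI) at 3 4 by ring.
    rewrite cos_period, sin_period. auto.
Qed.

Lemma dirichlet n (Lam : nat -> R) (Q : nat) (T : R) : (1 <= Q)%nat ->
  exists p : nat, (1 <= p <= Q ^ n)%nat /\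
    forall j, (j < n)%nat -> Cnorm (Csub (Cexpi (Lam j * (INR p * T))) (1, 0)) <= 2 * PI / INR Q.
Proof.
  intros HQ.
  assert (HQr : 1 <= INR Q) by (apply (le_INR 1); auto).
  assert (HPI : 0 < PI) by apply PI_RGT_0.
  set (x := fun j i => Lam j * (INR i * T) / (2 * PI)).
  set (fr := fun j i => x j i - IZR (Int_part (x j i))).
  assert (Hfr : forall j i, 0 <= fr j i < 1).
  { intros. unfold fr. destruct (base_Int_part (x j i)). lra. }
  set (dg := fun j i => Z.to_nat (Int_part (INR Q * fr j i))).
  assert (Hdg : forall j i, INR (dg j i) <= INR Q * fr j i < INR (dg j i) + 1 /\ (dg j i < Q)%nat).
  { intros j i. unfold dg. pose proof (Hfr j i).
    destruct (base_Int_part (INR Q * fr j i)) as [B1 B2].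
    assert (0 <= INR Q * fr j i) by nra.
    assert (Z0 : (0 <= Int_part (INR Q * fr j i))%Z).
    { assert (-1 < Int_part (INR Q * fr j i))%Z by (apply lt_IZR; simpl; lra). lia. }
    rewrite INR_IZR_INZ, Z2Nat.id by auto. split. split; lra.
    apply INR_lt. rewrite INR_IZR_INZ, Z2Nat.id by auto.
    assert (INR Q * fr j i < INR Q) by nra. lra. }
  set (code := fun i => codeSum Q n (fun j => dg j i)).
  destruct (php (Q ^ n) code) as [i1 [i2 [Hi Heq]]].
  { intros i Hi. unfold code. destruct (codeSum_lt Q n (fun j => dg j i)) as [A|[A B]].
    intros; apply Hdg. auto. subst. simpl. lia. }
  exists (i2 - i1)%nat. split. split. lia. lia.
  intros j Hj.
  assert (Hd : dg j i1 = dg j i2).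
  { apply (codeSum_inj Q n (fun j => dg j i1) (fun j => dg j i2)). lia. intros; split; apply Hdg. apply Heq. auto. }
  destruct (Hdg j i1) as [[A1 A2] _]. destruct (Hdg j i2) as [[B1 B2] _].
  rewrite Hd in A1, A2.
  assert (Hf : Rabs (fr j i2 - fr j i1) < 1 / INR Q).
  { assert (E1 : INR Q * (1 / INR Q) = 1) by (field; lra).
    apply Rabs_def1; apply Rmult_lt_reg_l with (INR Q); try lra; rewrite ?Ropp_mult_distr_r_reverse, ?E1; lra. }
  rewrite minus_INR by lia.
  replace (Lam j * ((INR i2 - INR i1) * T)) with
    (2 * PI * IZR (Int_part (x j i2) - Int_part (x j i1)) + 2 * PI * (fr j i2 - fr j i1)).
  2:{ unfold fr, x. rewrite minus_IZR. field. lra. }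
  rewrite cexpi_period.
  replace (1, 0) with (Cexpi 0) by (unfold Cexpi; rewrite cos_0, sin_0; auto).
  eapply Rle_trans. apply Cexpi_sub_le. rewrite Rminus_0_r, Rabs_mult, Rabs_pos_eq by lra.
  replace (2 * PI / INR Q) with (2 * PI * (1 / INR Q)) by (field; lra). 
  apply Rmult_le_compat_l; lra.
Qed.

Definition Yf (Lam : nat -> R) (P : (nat -> Cx) -> nat -> Cx) (t : R) (x : nat -> Cx) : nat -> Cx :=
  PhiL Lam t (P (PhiL Lam (- t) x)).

Lemma Phi_add Lam t s x : PhiL Lam (t + s) x = PhiL Lam t (PhiL Lam s x).
Proof.
  apply functional_extensionality; intro j. unfold PhiL, Cmul, Cexpi.
  replace (Lam j * (t + s)) with (Lam j * t + Lam j * s) by ring. rewrite cos_plus, sin_plus.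
  apply injective_projections; simpl; ring.
Qed.

Section YProps.
Variables (n : nat) (Lam : nat -> R) (P : (nat -> Cx) -> nat -> Cx) (K Rad : R).
Hypotheses (HK : 0 < K) (HR : 0 < Rad)
  (HPb : forall x, vnorm n x <= 2 * Rad -> vnorm n (P x) <= K)
  (HPl : forall x y, vnorm n x <= 2 * Rad -> vnorm n y <= 2 * Rad ->
          vnorm n (vsub (P x) (P y)) <= K * vnorm n (vsub x y)).

Lemma Y_bound t x : vnorm n x <= 2 * Rad -> vnorm n (Yf Lam P t x) <= K.
Proof. intros. unfold Yf. rewrite vnorm_Phi. apply HPb. rewrite vnorm_Phi. auto. Qed.

Lemma Y_lip t x y : vnorm n x <= 2 * Rad -> vnorm n y <= 2 * Rad ->
  vnorm n (vsub (Yf Lam P t x) (Yf Lam P t y)) <= K * vnorm n (vsub x y).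
Proof.
  intros. unfold Yf. rewrite Phi_sub, vnorm_Phi. eapply Rle_trans. apply HPl; rewrite vnorm_Phi; auto.
  rewrite Phi_sub, vnorm_Phi. lra.
Qed.

Lemma Y_shift t tau b d : vnorm n b <= 2 * Rad -> 0 <= d ->
  (forall j, (j < n)%nat -> Cnorm (Csub (Cexpi (Lam j * tau)) (1, 0)) <= d) ->
  vnorm n (vsub (Yf Lam P (t + tau) b) (Yf Lam P t b)) <= d * K * (2 * Rad + 1).
Proof.
  intros Hb Hd Hj. unfold Yf.
  set (c := PhiL Lam (- t) b).
  assert (Hc : vnorm n c <= 2 * Rad) by (unfold c; rewrite vnorm_Phi; auto).
  rewrite (Phi_add Lam t tau).
  replace (- (t + tau)) with (- tau + - t) by ring. rewrite (Phi_add Lam (- tau) (- t)). fold c.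
  rewrite Phi_sub, vnorm_Phi.
  eapply Rle_trans. apply (vnorm_tri n _ (PhiL Lam tau (P c))).
  rewrite Phi_sub, vnorm_Phi.
  assert (Hm : forall j, (j < n)%nat -> Cnorm (Csub (Cexpi (Lam j * - tau)) (1, 0)) <= d).
  { intros j Hjn. replace (Lam j * - tau) with (- (Lam j * tau)) by ring. rewrite Cexpi_neg_sub1. auto. }
  assert (H1 : vnorm n (vsub (PhiL Lam (- tau) c) c) <= d * vnorm n c) by (apply Phi_near_id; auto).
  assert (H2 : vnorm n (vsub (PhiL Lam tau (P c)) (P c)) <= d * vnorm n (P c)) by (apply Phi_near_id; auto).
  assert (Hc' : vnorm n (PhiL Lam (- tau) c) <= 2 * Rad) by (rewrite vnorm_Phi; auto).
  pose proof (HPl _ _ Hc' Hc). pose proof (HPb c Hc).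
  assert (d * vnorm n (P c) <= d * K) by (apply Rmult_le_compat_l; auto).
  assert (K * vnorm n (vsub (PhiL Lam (- tau) c) c) <= K * (d * (2 * Rad))).
  { apply Rmult_le_compat_l. lra. eapply Rle_trans. apply H1. apply Rmult_le_compat_l; auto. }
  nra.
Qed.

Lemma deriv_shift n' (G : R -> nat -> Cx) t tau d : deriv_at n' G (t + tau) d ->
  deriv_at n' (fun s => G (s + tau)) t d.
Proof.
  intros H j Hj. destruct (H j Hj) as [H1 H2]. split.
  - replace (Cre (d j)) with (Cre (d j) * 1) by ring.
    apply (derivable_pt_lim_comp (fun s => s + tau) (fun s => Cre (G s j))).
    apply derivable_pt_lim_ext with (f := plus_fct id (fct_cte tau)). intros; reflexivity.
    replace 1 with (1 + 0) by ring. apply derivable_pt_lim_plus. apply derivable_pt_lim_id. apply derivable_pt_lim_const.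
    auto.
  - replace (Cim (d j)) with (Cim (d j) * 1) by ring.
    apply (derivable_pt_lim_comp (fun s => s + tau) (fun s => Cim (G s j))).
    apply derivable_pt_lim_ext with (f := plus_fct id (fct_cte tau)). intros; reflexivity.
    replace 1 with (1 + 0) by ring. apply derivable_pt_lim_plus. apply derivable_pt_lim_id. apply derivable_pt_lim_const.
    auto.
Qed.

Lemma neg_mean (b : nat -> Cx) (G : R -> nat -> Cx) (w : nat -> Cx) :
  vnorm n b <= 2 * Rad ->
  (forall j, (j < n)%nat -> G 0 j = C0) ->
  (forall t, deriv_at n G t (Yf Lam P t b)) ->
  (forall e, 0 < e -> exists T0, forall T, T0 < T -> vnorm n (vsub (vscale (/ T) (G T)) w) <= e) ->
  forall e, 0 < e -> exists T0, forall T, T0 < T -> vnorm n (vsub (vscale (/ T) (G (- T))) (vscale (-1) w)) <= e.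
Proof.
  intros Hb HG0 HGd HGm e He.
  set (c1 := K * (2 * Rad + 1)). assert (Hc1 : 0 < c1) by (unfold c1; nra).
  set (dl := e / (2 * c1)). assert (Hdl : 0 < dl) by (unfold dl; apply Rdiv_lt_0_compat; lra).
  assert (HPI : 0 < PI) by apply PI_RGT_0.
  destruct (exists_nat_gt (Rmax 1 (2 * PI / dl))) as [Q HQ].
  assert (HQ1 : 1 < INR Q) by (eapply Rle_lt_trans; [apply Rmax_l|apply HQ]).
  assert (HQ2 : 2 * PI / dl < INR Q) by (eapply Rle_lt_trans; [apply Rmax_r|apply HQ]).
  assert (HQn : (1 <= Q)%nat) by (apply INR_le; simpl; lra).
  assert (HQd : 2 * PI / INR Q <= dl).
  { apply Rmult_le_reg_r with (INR Q / dl). apply Rdiv_lt_0_compat; lra.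
    replace (2 * PI / INR Q * (INR Q / dl)) with (2 * PI / dl) by (field; lra).
    replace (dl * (INR Q / dl)) with (INR Q) by (field; lra). lra. }
  set (m := (Q ^ n)%nat).
  assert (Hm1 : (1 <= m)%nat).
  { unfold m. pose proof (Nat.pow_le_mono_l 1 Q n HQn). rewrite Nat.pow_1_l in H. auto. }
  assert (Hm : 1 <= INR m) by (apply (le_INR 1); auto).
  set (e' := e / (4 * INR m)). assert (He' : 0 < e') by (unfold e'; apply Rdiv_lt_0_compat; lra).
  destruct (HGm e' He') as [T0 HT0].
  exists (Rmax T0 0). intros T HT.
  assert (HTp : 0 < T) by (eapply Rle_lt_trans; [apply Rmax_r|apply HT]).
  destruct (dirichlet n Lam Q T HQn) as [p [Hp Hpj]].
  set (tau := INR p * T).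
  assert (Hp1 : 1 <= INR p) by (apply (le_INR 1); lia).
  assert (Hpm : INR p <= INR m) by (apply le_INR; unfold m; lia).
  set (Ef := fun s => vsub (G (s + tau)) (G s)).
  assert (R1 : vnorm n (vsub (Ef 0) (Ef (- T))) <= dl * c1 * (0 - - T)).
  { apply (mvi n Ef (fun s => vsub (Yf Lam P (s + tau) b) (Yf Lam P s b))). lra.
    apply (deriv_cont n Ef (fun s => vsub (Yf Lam P (s + tau) b) (Yf Lam P s b))).
    intros s _. apply deriv_vsub. apply deriv_shift. apply HGd. apply HGd.
    intros s _. apply deriv_vsub. apply deriv_shift. apply HGd. apply HGd.
    intros s _. eapply Rle_trans. apply (Y_shift s tau b (2 * PI / INR Q)).
    auto. left; apply Rdiv_lt_0_compat; lra. intros j Hj. unfold tau. apply Hpj; auto.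
    unfold c1. replace (dl * (K * (2 * Rad + 1))) with (dl * K * (2 * Rad + 1)) by ring.
    apply Rmult_le_compat_r. nra. apply Rmult_le_compat_r; lra. }
  assert (HGm' : forall T', Rmax T0 0 < T' -> vnorm n (vsub (vscale (/ T') (G T')) w) <= e').
  { intros T' HT'. apply HT0. eapply Rle_lt_trans; [apply Rmax_l|apply HT']. }
  pose proof (mean_nodes n G w e' (Rmax T0 0) T HG0 (Rmax_r _ _) HT ltac:(lra) HGm' p) as M1.
  pose proof (mean_nodes n G w e' (Rmax T0 0) T HG0 (Rmax_r _ _) HT ltac:(lra) HGm' (p - 1)) as M0.
  rewrite minus_INR in M0 by lia. change (INR 1) with 1 in M0.
  unfold Ef in R1. replace (0 + tau) with (INR p * T) in R1 by (unfold tau; ring).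
  replace (- T + tau) with ((INR p - 1) * T) in R1 by (unfold tau; ring).
  set (X := vadd (vadd (vsub (vsub (G (INR p * T)) (G 0)) (vsub (G ((INR p - 1) * T)) (G (- T))))
        (vscale (-1) (vsub (G (INR p * T)) (vscale (INR p * T) w))))
        (vsub (G ((INR p - 1) * T)) (vscale ((INR p - 1) * T) w))).
  assert (HX : vnorm n (vsub (vscale (/ T) (G (- T))) (vscale (-1) w)) = / T * vnorm n X).
  { rewrite <- (Rabs_pos_eq (/ T)) by (left; apply Rinv_0_lt_compat; lra). rewrite <- vnorm_scale.
    apply vnorm_ext. intros j Hj. unfold X, vsub, vadd, vscale, Csub, Cadd, Cscale.
    rewrite (HG0 j Hj). unfold C0. rewrite ?(Rabs_pos_eq (/ T)) by (left; apply Rinv_0_lt_compat; lra). apply injective_projections; simpl; field; lra. }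
  rewrite HX.
  assert (HXb : vnorm n X <= dl * c1 * T + INR p * T * e' + (INR p - 1) * T * e').
  { unfold X. eapply Rle_trans. apply vnorm_add3. rewrite vnorm_scale, Rabs_left by lra.
    replace (0 - - T) with T in R1 by ring. cbv beta in R1. lra. }
  apply Rmult_le_reg_l with T. auto. rewrite <- Rmult_assoc, Rinv_r, Rmult_1_l by lra.
  eapply Rle_trans. apply HXb.
  assert (dl * c1 = e / 2) by (unfold dl; field; lra).
  assert (INR p * e' + (INR p - 1) * e' <= e / 2).
  { unfold e'. apply Rle_trans with (2 * INR m * (e / (4 * INR m))).
    assert (0 <= (2 * INR m - 2 * INR p + 1) * (e / (4 * INR m))). apply Rmult_le_pos. lra. left; auto. nra.
    right. field. lra. }
  nra.
Qed.
End YProps.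

Section Retr.
Variables (n : nat) (Rad : R).
Hypothesis HR : 0 < Rad.

Definition rtr (x : nat -> Cx) : nat -> Cx :=
  if Rle_dec (vnorm n x) (2 * Rad) then x else vscale (2 * Rad / vnorm n x) x.

Lemma rtr_in x : vnorm n x <= 2 * Rad -> rtr x = x.
Proof. intros. unfold rtr. destruct Rle_dec; auto. lra. Qed.

Lemma rtr_bound x : vnorm n (rtr x) <= 2 * Rad.
Proof.
  unfold rtr. destruct Rle_dec; auto. rewrite vnorm_scale.
  rewrite Rabs_pos_eq. unfold Rdiv. rewrite Rmult_assoc, Rinv_l; lra.
  apply Rlt_le, Rdiv_lt_0_compat; lra.
Qed.

Lemma out_lip x y : 2 * Rad < vnorm n x ->
  vnorm n (vsub (vscale (2 * Rad / vnorm n x) x) y) <= (vnorm n x - 2 * Rad) + vnorm n (vsub x y).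
Proof.
  intros Hx. replace (vsub (vscale (2 * Rad / vnorm n x) x) y) with
    (vadd (vscale (2 * Rad / vnorm n x - 1) x) (vsub x y)) by vring.
  eapply Rle_trans. apply vnorm_add. rewrite vnorm_scale.
  assert (2 * Rad / vnorm n x <= 1).
  { apply Rmult_le_reg_r with (vnorm n x). lra. unfold Rdiv. rewrite Rmult_assoc, Rinv_l; lra. }
  rewrite Rabs_left1 by lra.
  replace (- (2 * Rad / vnorm n x - 1) * vnorm n x) with (vnorm n x - 2 * Rad) by (field; lra). lra.
Qed.

Lemma rtr_lip x y : vnorm n (vsub (rtr x) (rtr y)) <= 2 * vnorm n (vsub x y).
Proof.
  pose proof (vnorm_rev_tri n x y). apply abs_le_split in H.
  pose proof (vnorm_nonneg n (vsub x y)).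
  unfold rtr. destruct (Rle_dec (vnorm n x) (2 * Rad)), (Rle_dec (vnorm n y) (2 * Rad)).
  - lra.
  - rewrite vnorm_sub_sym. eapply Rle_trans. apply out_lip. lra. rewrite vnorm_sub_sym. lra.
  - eapply Rle_trans. apply out_lip. lra. lra.
  - set (cx := 2 * Rad / vnorm n x). set (cy := 2 * Rad / vnorm n y).
    replace (vsub (vscale cx x) (vscale cy y)) with (vadd (vscale cx (vsub x y)) (vscale (cx - cy) y)) by vring.
    eapply Rle_trans. apply vnorm_add. rewrite !vnorm_scale.
    assert (Hcx : 0 <= cx <= 1).
    { unfold cx. split. apply Rlt_le, Rdiv_lt_0_compat; lra.
      apply Rmult_le_reg_r with (vnorm n x). lra. unfold Rdiv. rewrite Rmult_assoc, Rinv_l; lra. }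
    assert (Hc : Rabs (cx - cy) * vnorm n y <= vnorm n (vsub x y)).
    { replace ((cx - cy) * 1) with (cx - cy) by ring.
      replace (Rabs (cx - cy) * vnorm n y) with (Rabs ((cx - cy) * vnorm n y)) by
        (rewrite Rabs_mult, (Rabs_pos_eq (vnorm n y)) by apply vnorm_nonneg; auto).
      replace ((cx - cy) * vnorm n y) with (cx * (vnorm n y - vnorm n x)) by (unfold cx, cy; field; lra).
      rewrite Rabs_mult, Rabs_pos_eq by lra. rewrite Rabs_minus_sym.
      apply Rle_trans with (1 * Rabs (vnorm n x - vnorm n y)). apply Rmult_le_compat_r. apply Rabs_pos. lra.
      rewrite Rmult_1_l. apply vnorm_rev_tri. }
    rewrite Rabs_pos_eq by lra. nra.
Qed.
End Retr.

Definition gcont (n : nat) (u : R -> nat -> Cx) : Prop :=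
  forall t e, 0 < e -> exists d, 0 < d /\ forall s, Rabs (s - t) < d -> vnorm n (vsub (u s) (u t)) < e.

Lemma gcont_cont_on n u a b : gcont n u -> cont_on n u a b.
Proof. intros H t _ e He. destruct (H t e He) as [d [Hd H']]. exists d. split; auto. Qed.

Lemma deriv_gcont n u d : (forall t, deriv_at n u t (d t)) -> gcont n u.
Proof.
  intros H t e He. destruct (deriv_cont n u d (t - 1) (t + 1) (fun s _ => H s) t ltac:(lra) e He) as [d0 [Hd0 H0]].
  exists (Rmin d0 1). split. apply Rmin_pos; lra. intros s Hs.
  pose proof (Rmin_r d0 1). pose proof (Rmin_l d0 1).
  apply H0. pose proof Hs as Hs'. apply Rabs_def2 in Hs'. lra. lra.
Qed.

Lemma comp_cont n (u : R -> nat -> Cx) t j : (j < n)%nat ->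
  (forall e, 0 < e -> exists d, 0 < d /\ forall s, Rabs (s - t) < d -> vnorm n (vsub (u s) (u t)) < e) ->
  continuity_pt (fun s => fst (u s j)) t /\ continuity_pt (fun s => snd (u s j)) t.
Proof.
  intros Hj H. split; intros e He; destruct (H e He) as [d [Hd H']]; exists d; (split; [auto|]);
  intros s [_ Hs]; simpl in *; unfold R_dist in *; specialize (H' s Hs);
  (eapply Rle_lt_trans; [|apply H']);
  (eapply Rle_trans; [|apply (Cnorm_le_vnorm n _ j Hj)]).
  pose proof (fst_le_Cnorm (vsub (u s) (u t) j)). unfold vsub, Csub in *; simpl in *; lra.
  pose proof (snd_le_Cnorm (vsub (u s) (u t) j)). unfold vsub, Csub in *; simpl in *; lra.
Qed.

Lemma exp_le_mono x y : x <= y -> exp x <= exp y.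
Proof. intros [H|H]. left; apply exp_increasing; auto. subst; lra. Qed.

Lemma x_le_exp x : x <= exp x.
Proof. destruct (Req_dec x 0). subst. rewrite exp_0. lra. pose proof (exp_ineq1 x H). lra. Qed.

Lemma cont_exp t : continuity_pt exp t.
Proof. apply derivable_continuous_pt. exists (exp t). apply derivable_pt_lim_exp. Qed.

Lemma ftc (f : R -> R) : (forall t, continuity_pt f t) ->
  forall t, derivable_pt_lim (fun x => RInt f 0 x) t (f t).
Proof.
  intros Hf t. apply is_derive_Reals. apply (is_derive_RInt f (fun x => RInt f 0 x) 0 t).
  - exists (mkposreal 1 Rlt_0_1). intros b0 _.
    refine (@RInt_correct R_CompleteNormedModule f 0 b0 (@ex_RInt_continuous R_CompleteNormedModule f 0 b0 _)).
    intros z _. apply continuity_pt_filterlim. apply Hf.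
  - apply continuity_pt_filterlim. apply Hf.
Qed.

Lemma cont_on_Phi n Lam u a b : cont_on n u a b -> cont_on n (fun s => PhiL Lam s (u s)) a b.
Proof.
  intros Hu t Ht e He. destruct (Hu t Ht (e / 2)) as [d1 [Hd1 H1]]. lra.
  set (L := Lsum n Lam * vnorm n (u t) + 1).
  assert (HL : 0 < L) by (unfold L; pose proof (Lsum_nonneg n Lam); pose proof (vnorm_nonneg n (u t)); nra).
  exists (Rmin d1 (e / (2 * L))). split. apply Rmin_pos; auto. apply Rdiv_lt_0_compat; lra.
  intros s Hs Hst.
  eapply Rle_lt_trans. apply (vnorm_tri n _ (PhiL Lam s (u t))).
  rewrite Phi_sub, vnorm_Phi.
  assert (vnorm n (vsub (u s) (u t)) < e / 2) by (apply H1; auto; eapply Rlt_le_trans; [apply Hst|apply Rmin_l]).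
  pose proof (Phi_time_lip n Lam s t (u t)).
  assert (Rabs (s - t) < e / (2 * L)) by (eapply Rlt_le_trans; [apply Hst|apply Rmin_r]).
  assert (Lsum n Lam * Rabs (s - t) * vnorm n (u t) <= L * Rabs (s - t)).
  { unfold L. pose proof (Lsum_nonneg n Lam). pose proof (vnorm_nonneg n (u t)). pose proof (Rabs_pos (s - t)). nra. }
  assert (L * Rabs (s - t) < e / 2).
  { apply Rlt_le_trans with (L * (e / (2 * L))). apply Rmult_lt_compat_l; auto. right; field; lra. }
  lra.
Qed.

Section Picard.
Variables (n : nat) (Lam : nat -> R) (P : (nat -> Cx) -> nat -> Cx) (K Rad eps : R) (v0 : nat -> Cx).
Hypotheses (HK : 0 < K) (HR : 0 < Rad) (Heps : 0 < eps)
  (HPb : forall x, vnorm n x <= 2 * Rad -> vnorm n (P x) <= K)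
  (HPl : forall x y, vnorm n x <= 2 * Rad -> vnorm n y <= 2 * Rad ->
          vnorm n (vsub (P x) (P y)) <= K * vnorm n (vsub x y)).

Definition Pt (x : nat -> Cx) := P (rtr n Rad x).
Definition Z (t : R) (x : nat -> Cx) := Yf Lam Pt t x.

Lemma Pt_bound x : vnorm n (Pt x) <= K.
Proof. unfold Pt. apply HPb. apply rtr_bound; auto. Qed.

Lemma Pt_lip x y : vnorm n (vsub (Pt x) (Pt y)) <= 2 * K * vnorm n (vsub x y).
Proof.
  unfold Pt. eapply Rle_trans. apply HPl; apply rtr_bound; auto.
  pose proof (rtr_lip n Rad HR x y). nra.
Qed.

Lemma Z_bound t x : vnorm n (Z t x) <= K.
Proof. unfold Z, Yf. rewrite vnorm_Phi. apply Pt_bound. Qed.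

Lemma Z_lip t x y : vnorm n (vsub (Z t x) (Z t y)) <= 2 * K * vnorm n (vsub x y).
Proof.
  unfold Z, Yf. rewrite Phi_sub, vnorm_Phi. eapply Rle_trans. apply Pt_lip.
  rewrite Phi_sub, vnorm_Phi. lra.
Qed.

Lemma Z_time s t x : vnorm n (vsub (Z s x) (Z t x)) <= Lsum n Lam * Rabs (s - t) * (K + 2 * K * vnorm n x).
Proof.
  unfold Z, Yf.
  eapply Rle_trans. apply (vnorm_tri n _ (PhiL Lam t (Pt (PhiL Lam (- s) x)))).
  rewrite (Phi_sub Lam t), vnorm_Phi.
  pose proof (Phi_time_lip n Lam s t (Pt (PhiL Lam (- s) x))).
  pose proof (Pt_bound (PhiL Lam (- s) x)).
  pose proof (Pt_lip (PhiL Lam (- s) x) (PhiL Lam (- t) x)).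
  pose proof (Phi_time_lip n Lam (- s) (- t) x).
  replace (- s - - t) with (- (s - t)) in H2 by ring. rewrite Rabs_Ropp in H2.
  pose proof (Lsum_nonneg n Lam). pose proof (Rabs_pos (s - t)).
  assert (0 <= Lsum n Lam * Rabs (s - t)) by nra.
  assert (Lsum n Lam * Rabs (s - t) * vnorm n (Pt (PhiL Lam (- s) x)) <= Lsum n Lam * Rabs (s - t) * K).
  { apply Rmult_le_compat_l; auto. }
  nra.
Qed.

Lemma Z_comp_cont u : gcont n u -> forall t j, (j < n)%nat ->
  continuity_pt (fun s => fst (Z s (u s) j)) t /\ continuity_pt (fun s => snd (Z s (u s) j)) t.
Proof.
  intros Hu t j Hj. apply (comp_cont n (fun s => Z s (u s)) t j); auto. intros e He.
  set (L := Lsum n Lam * (K + 2 * K * vnorm n (u t)) + 1).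
  assert (HL : 0 < L).
  { unfold L. pose proof (Lsum_nonneg n Lam). pose proof (vnorm_nonneg n (u t)).
    assert (0 <= Lsum n Lam * (K + 2 * K * vnorm n (u t))) by (apply Rmult_le_pos; nra). lra. }
  destruct (Hu t (e / (4 * K))) as [d1 [Hd1 H1]]. apply Rdiv_lt_0_compat; lra.
  exists (Rmin d1 (e / (2 * L))). split. apply Rmin_pos; auto. apply Rdiv_lt_0_compat; lra.
  intros s Hst.
  eapply Rle_lt_trans. apply (vnorm_tri n _ (Z s (u t))).
  pose proof (Z_lip s (u s) (u t)). pose proof (Z_time s t (u t)).
  assert (vnorm n (vsub (u s) (u t)) < e / (4 * K)) by (apply H1; eapply Rlt_le_trans; [apply Hst|apply Rmin_l]).
  assert (Rabs (s - t) < e / (2 * L)) by (eapply Rlt_le_trans; [apply Hst|apply Rmin_r]).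
  assert (2 * K * vnorm n (vsub (u s) (u t)) < e / 2).
  { apply Rlt_le_trans with (2 * K * (e / (4 * K))). apply Rmult_lt_compat_l; lra. right; field; lra. }
  assert (Lsum n Lam * Rabs (s - t) * (K + 2 * K * vnorm n (u t)) <= L * Rabs (s - t)).
  { unfold L. pose proof (Lsum_nonneg n Lam). pose proof (vnorm_nonneg n (u t)). pose proof (Rabs_pos (s - t)). nra. }
  assert (L * Rabs (s - t) < e / 2).
  { apply Rlt_le_trans with (L * (e / (2 * L))). apply Rmult_lt_compat_l; auto. right; field; lra. }
  lra.
Qed.

Definition integ (u : R -> nat -> Cx) (t : R) : nat -> Cx :=
  fun j => (fst (v0 j) + eps * RInt (fun s => fst (Z s (u s) j)) 0 t,
            snd (v0 j) + eps * RInt (fun s => snd (Z s (u s) j)) 0 t).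

Lemma integ_deriv u : gcont n u -> forall t, deriv_at n (integ u) t (vscale eps (Z t (u t))).
Proof.
  intros Hu t j Hj. split.
  - apply derivable_pt_lim_ext with (f := plus_fct (fct_cte (fst (v0 j))) (mult_real_fct eps (fun x => RInt (fun s => fst (Z s (u s) j)) 0 x))).
    intros; unfold plus_fct, fct_cte, mult_real_fct, integ, Cre; simpl; reflexivity.
    unfold vscale, Cscale, Cre; cbn [fst snd].
    replace (eps * fst (Z t (u t) j)) with (0 + eps * fst (Z t (u t) j)) by ring.
    apply derivable_pt_lim_plus. apply derivable_pt_lim_const. apply derivable_pt_lim_scal.
    apply ftc. intros; apply (Z_comp_cont u Hu); auto.
  - apply derivable_pt_lim_ext with (f := plus_fct (fct_cte (snd (v0 j))) (mult_real_fct eps (fun x => RInt (fun s => snd (Z s (u s) j)) 0 x))).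
    intros; unfold plus_fct, fct_cte, mult_real_fct, integ, Cim; simpl; reflexivity.
    unfold vscale, Cscale, Cim; cbn [fst snd].
    replace (eps * snd (Z t (u t) j)) with (0 + eps * snd (Z t (u t) j)) by ring.
    apply derivable_pt_lim_plus. apply derivable_pt_lim_const. apply derivable_pt_lim_scal.
    apply ftc. intros; apply (Z_comp_cont u Hu); auto.
Qed.

Lemma integ_0 u : integ u 0 = v0.
Proof.
  apply functional_extensionality; intro j. unfold integ. rewrite !RInt_point. 
  apply injective_projections; simpl; unfold zero; simpl; ring.
Qed.

Fixpoint pic (k : nat) : R -> nat -> Cx :=
  match k with O => fun _ => v0 | S k' => integ (pic k') end.

Lemma pic_good k : gcont n (pic k).
Proof.
  induction k.
  - intros t e He. exists 1. split. lra. intros s _. simpl. rewrite vnorm_sub_self. lra.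
  - simpl. apply (deriv_gcont n _ (fun t => vscale eps (Z t (pic k t)))). apply integ_deriv. auto.
Qed.

Lemma pic_deriv k t : deriv_at n (pic (S k)) t (vscale eps (Z t (pic k t))).
Proof. simpl. apply integ_deriv. apply pic_good. Qed.

End Picard.

Lemma lim_le (x : nat -> R) y Bd k : ex_finite_lim_seq x ->
  (forall m, (k <= m)%nat -> Rabs (x m - y) <= Bd) -> Rabs (real (Lim_seq x) - y) <= Bd.
Proof.
  intros Hx Hb. pose proof (Lim_seq_correct' x Hx) as Hl.
  destruct (proj1 (ex_finite_lim_seq_correct x) Hx) as [_ Hfin].
  rewrite <- Hfin in Hl. set (L := real (Lim_seq x)) in *.
  apply is_lim_seq_spec in Hl. simpl in Hl.
  apply Rnot_lt_le. intro Hc.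
  assert (He : 0 < Rabs (L - y) - Bd) by lra.
  destruct (Hl (mkposreal _ He)) as [N HN]. simpl in HN.
  specialize (HN (Nat.max N k) (Nat.le_max_l _ _)). specialize (Hb (Nat.max N k) (Nat.le_max_r _ _)).
  pose proof (Rabs_triang (L - x (Nat.max N k)) (x (Nat.max N k) - y)).
  replace (L - x (Nat.max N k) + (x (Nat.max N k) - y)) with (L - y) in H by ring.
  rewrite Rabs_minus_sym in HN. lra.
Qed.

Lemma pow_half_small e : 0 < e -> exists N, forall k, (N <= k)%nat -> (/ 2) ^ k < e.
Proof.
  intros He. destruct (pow_lt_1_zero (/ 2) ltac:(rewrite Rabs_pos_eq; lra) e He) as [N HN].
  exists N. intros k Hk. specialize (HN k Hk). rewrite Rabs_pos_eq in HN; auto. apply pow_le; lra.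
Qed.

Lemma deriv_at_ext n (u u' : R -> nat -> Cx) t d : (forall s j, (j < n)%nat -> u s j = u' s j) ->
  deriv_at n u' t d -> deriv_at n u t d.
Proof.
  intros He H j Hj. destruct (H j Hj). split.
  - apply derivable_pt_lim_ext with (f := fun s => Cre (u' s j)). intros; rewrite He; auto. auto.
  - apply derivable_pt_lim_ext with (f := fun s => Cim (u' s j)). intros; rewrite He; auto. auto.
Qed.

Lemma deriv_at_ext_d n (u : R -> nat -> Cx) t d d' : (forall j, (j < n)%nat -> d j = d' j) ->
  deriv_at n u t d -> deriv_at n u t d'.
Proof. intros He H j Hj. rewrite <- He by auto. apply H; auto. Qed.

Lemma vsub_zero_r x : vsub x vzero = x.
Proof. apply functional_extensionality; intro j. unfold vsub, vzero, Csub, C0. destruct (x j); simpl; f_equal; ring. Qed.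

Lemma rcont_exp A c a b : rcont (fun s => A * exp (c * s)) a b.
Proof.
  apply rcont_of_cont. intros t. apply continuity_pt_scal.
  apply (continuity_pt_comp (fun s => c * s) exp).
  apply derivable_continuous_pt. exists c. 
  apply derivable_pt_lim_ext with (f := mult_real_fct c id). intros; reflexivity.
  replace c with (c * 1) at 2 by ring. apply derivable_pt_lim_scal, derivable_pt_lim_id.
  apply cont_exp.
Qed.

Lemma deriv_exp A c t : derivable_pt_lim (fun s => A * exp (c * s)) t (A * (c * exp (c * t))).
Proof.
  apply (derivable_pt_lim_scal (fun s => exp (c * s))).
  replace (c * exp (c * t)) with (exp (c * t) * c) by ring.
  apply (derivable_pt_lim_comp (fun s => c * s) exp).
  apply derivable_pt_lim_ext with (f := mult_real_fct c id). intros; reflexivity.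
  replace c with (c * 1) at 2 by ring. apply derivable_pt_lim_scal, derivable_pt_lim_id.
  apply derivable_pt_lim_exp.
Qed.

Section PicBounds.
Variables (n : nat) (Lam : nat -> R) (P : (nat -> Cx) -> nat -> Cx) (K Rad eps : R) (v0 : nat -> Cx).
Hypotheses (HK : 0 < K) (HR : 0 < Rad) (Heps : 0 < eps)
  (HPb : forall x, vnorm n x <= 2 * Rad -> vnorm n (P x) <= K)
  (HPl : forall x y, vnorm n x <= 2 * Rad -> vnorm n y <= 2 * Rad ->
          vnorm n (vsub (P x) (P y)) <= K * vnorm n (vsub x y)).

Local Notation Zl := (Z n Lam P Rad).
Local Notation pc := (pic n Lam P Rad eps v0).

Let c := 2 * eps * K.
Let B := / 4.
Let Eb t := exp (2 * c * Rabs t).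

Lemma Hc : 0 < c. Proof. unfold c; nra. Qed.

Lemma pic_S0 k : pc (S k) 0 = v0.
Proof. simpl. apply integ_0. Qed.

Lemma Zd_bound t x : vnorm n (vscale eps (Zl t x)) <= eps * K.
Proof. rewrite vnorm_scale, Rabs_pos_eq by lra. apply Rmult_le_compat_l. lra. apply (Z_bound n Lam P K Rad HR HPb). Qed.

Lemma Zd_lip t x y : vnorm n (vsub (vscale eps (Zl t x)) (vscale eps (Zl t y))) <= c * vnorm n (vsub x y).
Proof.
  replace (vsub (vscale eps (Zl t x)) (vscale eps (Zl t y))) with (vscale eps (vsub (Zl t x) (Zl t y))) by vring.
  rewrite vnorm_scale, Rabs_pos_eq by lra. unfold c.
  pose proof (Z_lip n Lam P K Rad HK HR HPl t x y). nra.
Qed.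

Lemma pic_step_bound k t : vnorm n (vsub (pc (S k) t) (pc k t)) <= B * (/ 2) ^ k * Eb t.
Proof.
  pose proof Hc as Hc0.
  induction k as [|k IH] in t |- *.
  - simpl pc at 2. rewrite <- (pic_S0 0) at 2.
    assert (Hb : vnorm n (vsub (pc 1 t) (pc 1 0)) <= eps * K * Rabs t).
    { destruct (Rle_dec 0 t).
      - rewrite Rabs_pos_eq by auto. replace t with (t - 0) at 2 by ring.
        apply (mvi n (pc 1) (fun s => vscale eps (Zl s (pc 0 s)))); auto.
        apply gcont_cont_on. apply (pic_good n Lam P K Rad eps v0 HK HR HPb HPl).
        intros; apply (pic_deriv n Lam P K Rad eps v0 HK HR HPb HPl). intros; apply Zd_bound.
      - rewrite Rabs_left by lra. rewrite vnorm_sub_sym. replace (- t) with (0 - t) by ring.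
        apply (mvi n (pc 1) (fun s => vscale eps (Zl s (pc 0 s)))); try lra.
        apply gcont_cont_on. apply (pic_good n Lam P K Rad eps v0 HK HR HPb HPl).
        intros; apply (pic_deriv n Lam P K Rad eps v0 HK HR HPb HPl). intros; apply Zd_bound. }
    eapply Rle_trans. apply Hb. unfold Eb, B. simpl. pose proof (x_le_exp (2 * c * Rabs t)).
    replace (eps * K * Rabs t) with (/ 4 * (2 * c * Rabs t)) by (unfold c; field). 
    pose proof (Rabs_pos t). lra.
  - set (u := fun s => vsub (pc (S (S k)) s) (pc (S k) s)).
    assert (Hu0 : u 0 = vzero) by (unfold u; rewrite !pic_S0; apply vsub_self).
    assert (Hud : forall s, deriv_at n u s (vsub (vscale eps (Zl s (pc (S k) s))) (vscale eps (Zl s (pc k s))))).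
    { intros s. apply deriv_vsub; apply (pic_deriv n Lam P K Rad eps v0 HK HR HPb HPl). }
    assert (Hub : forall s, vnorm n (vsub (vscale eps (Zl s (pc (S k) s))) (vscale eps (Zl s (pc k s)))) <= c * (B * (/ 2) ^ k) * Eb s).
    { intros s. eapply Rle_trans. apply Zd_lip. rewrite Rmult_assoc. apply Rmult_le_compat_l. lra. apply IH. }
    set (du := fun s => vsub (vscale eps (Zl s (pc (S k) s))) (vscale eps (Zl s (pc k s)))).
    assert (Huc : forall a b, cont_on n u a b) by (intros; apply (deriv_cont n u du); intros; apply Hud).
    change (vnorm n (u t) <= B * (/ 2) ^ S k * Eb t).
    set (A := B * (/ 2) ^ k). assert (HA : 0 < A) by (unfold A, B; apply Rmult_lt_0_compat; [lra|apply pow_lt; lra]).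
    replace (B * (/ 2) ^ S k) with (A / 2) by (unfold A; simpl; field).
    destruct (Rle_dec 0 t).
    + assert (vnorm n (vsub (u t) (u 0)) <= (A / 2) * exp (2 * c * t) - (A / 2) * exp (2 * c * 0)).
      { apply (mvi_gen n u du (fun s => (A / 2) * exp (2 * c * s)) (fun s => (A / 2) * (2 * c * exp (2 * c * s)))); auto.
        apply rcont_exp. intros; apply deriv_exp.
        intros s Hs. eapply Rle_trans. apply Hub. unfold Eb. rewrite Rabs_pos_eq by lra. right; unfold A; field. }
      rewrite Hu0, vsub_zero_r in H.
      assert (HE : Eb t = exp (2 * c * t)) by (unfold Eb; rewrite Rabs_pos_eq; auto).
      rewrite HE. assert (0 < A / 2 * exp (2 * c * 0)) by (apply Rmult_lt_0_compat; [lra|apply exp_pos]). lra.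
    + assert (vnorm n (vsub (u 0) (u t)) <= (- (A / 2) * exp (-2 * c * 0)) - (- (A / 2) * exp (-2 * c * t))).
      { apply (mvi_gen n u du (fun s => - (A / 2) * exp (-2 * c * s)) (fun s => - (A / 2) * (-2 * c * exp (-2 * c * s)))); try lra; auto.
        apply rcont_exp. intros; apply deriv_exp.
        intros s Hs. eapply Rle_trans. apply Hub. unfold Eb. rewrite Rabs_left by lra.
        replace (2 * c * - s) with (-2 * c * s) by ring. right; unfold A; field. }
      rewrite Hu0, vnorm_sub_sym, vsub_zero_r in H.
      assert (HE : Eb t = exp (-2 * c * t)) by (unfold Eb; rewrite Rabs_left by lra; f_equal; ring).
      rewrite HE. assert (0 < A / 2 * exp (-2 * c * 0)) by (apply Rmult_lt_0_compat; [lra|apply exp_pos]). lra.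
Qed.

Lemma pic_cauchy k d t : vnorm n (vsub (pc (k + d) t) (pc k t)) <= 2 * B * Eb t * ((/ 2) ^ k - (/ 2) ^ (k + d)).
Proof.
  induction d.
  - rewrite Nat.add_0_r, vnorm_sub_self. lra.
  - rewrite Nat.add_succ_r. eapply Rle_trans. apply (vnorm_tri n _ (pc (k + d) t)).
    pose proof (pic_step_bound (k + d) t). simpl pow at 2.
    lra.
Qed.

Lemma pic_cauchy' k m t : (k <= m)%nat -> vnorm n (vsub (pc m t) (pc k t)) <= 2 * B * Eb t * (/ 2) ^ k.
Proof.
  intros Hkm. replace m with (k + (m - k))%nat by lia. eapply Rle_trans. apply pic_cauchy.
  assert (0 < (/ 2) ^ (k + (m - k))) by (apply pow_lt; lra).
  assert (0 < 2 * B * Eb t) by (unfold B, Eb; pose proof (exp_pos (2 * c * Rabs t)); lra).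
  nra.
Qed.

Definition ul (t : R) : nat -> Cx := fun j =>
  (real (Lim_seq (fun m => fst (pc m t j))), real (Lim_seq (fun m => snd (pc m t j)))).

Lemma comp_fin (f : nat -> R) t : (forall k m, (k <= m)%nat -> Rabs (f m - f k) <= 2 * B * Eb t * (/ 2) ^ k) ->
  ex_finite_lim_seq f.
Proof.
  intros H. apply ex_lim_seq_cauchy_corr. intros e.
  assert (Hpos : 0 < e / (4 * B * Eb t + 1)).
  { apply Rdiv_lt_0_compat. apply cond_pos. unfold B, Eb; pose proof (exp_pos (2 * c * Rabs t)); lra. }
  destruct (pow_half_small _ Hpos) as [N HN]. exists N. intros n1 n2 H1 H2.
  pose proof (H N n1 H1). pose proof (H N n2 H2). specialize (HN N (le_n _)).
  pose proof (Rabs_triang (f n1 - f N) (f N - f n2)).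
  replace (f n1 - f N + (f N - f n2)) with (f n1 - f n2) in H4 by ring.
  rewrite (Rabs_minus_sym (f N)) in H4.
  assert (HB : 0 < 4 * B * Eb t) by (unfold B, Eb; pose proof (exp_pos (2 * c * Rabs t)); lra).
  assert (4 * B * Eb t * (/ 2) ^ N < e).
  { apply Rle_lt_trans with ((4 * B * Eb t + 1) * (/ 2) ^ N). assert (0 < (/2)^N) by (apply pow_lt; lra). nra.
    apply Rmult_lt_reg_r with (/ (4 * B * Eb t + 1)). apply Rinv_0_lt_compat; lra.
    replace ((4 * B * Eb t + 1) * (/ 2) ^ N * / (4 * B * Eb t + 1)) with ((/ 2) ^ N) by (field; lra). 
    unfold Rdiv in HN. auto. }
  lra.
Qed.

Lemma ul_close k t : vnorm n (vsub (ul t) (pc k t)) <= 2 * INR n * (2 * B * Eb t * (/ 2) ^ k).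
Proof.
  apply vnorm_le_comp2. intros j Hj. unfold ul, vsub, Csub; simpl.
  assert (Hf : forall k m, (k <= m)%nat -> Rabs (fst (pc m t j) - fst (pc k t j)) <= 2 * B * Eb t * (/ 2) ^ k).
  { intros k' m Hkm. eapply Rle_trans. 2: apply (pic_cauchy' k' m t Hkm).
    eapply Rle_trans. 2: apply (Cnorm_le_vnorm n _ j Hj). 
    pose proof (fst_le_Cnorm (vsub (pc m t) (pc k' t) j)). unfold vsub, Csub in *; simpl in *; lra. }
  assert (Hs : forall k m, (k <= m)%nat -> Rabs (snd (pc m t j) - snd (pc k t j)) <= 2 * B * Eb t * (/ 2) ^ k).
  { intros k' m Hkm. eapply Rle_trans. 2: apply (pic_cauchy' k' m t Hkm).
    eapply Rle_trans. 2: apply (Cnorm_le_vnorm n _ j Hj). 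
    pose proof (snd_le_Cnorm (vsub (pc m t) (pc k' t) j)). unfold vsub, Csub in *; simpl in *; lra. }
  split; apply (lim_le _ _ _ k). apply (comp_fin _ t Hf). intros; apply Hf; auto.
  apply (comp_fin _ t Hs). intros; apply Hs; auto.
Qed.

Lemma Eb_mono s t : Rabs s <= Rabs t -> Eb s <= Eb t.
Proof. intros. unfold Eb. apply exp_le_mono. pose proof Hc. nra. Qed.

Lemma ul_gcont : gcont n ul.
Proof.
  intros t e He.
  set (E1 := Eb (Rabs t + 1)).
  assert (HE1 : forall s, Rabs (s - t) < 1 -> Eb s <= E1).
  { intros s Hs. apply Eb_mono. rewrite (Rabs_pos_eq (Rabs t + 1)) by (pose proof (Rabs_pos t); lra).
    pose proof (Rabs_triang (s - t) t). replace (s - t + t) with s in H by ring. lra. }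
  set (C := 2 * INR n * (2 * B * E1) + 1).
  assert (HC : 0 < C) by (unfold C, B, E1, Eb; pose proof (pos_INR n); pose proof (exp_pos (2 * c * Rabs (Rabs t + 1))); nra).
  destruct (pow_half_small (e / (3 * C))) as [k Hk]. apply Rdiv_lt_0_compat; lra.
  specialize (Hk k (le_n _)).
  destruct (pic_good n Lam P K Rad eps v0 HK HR HPb HPl k t (e / 3)) as [d1 [Hd1 H1]]. lra.
  exists (Rmin 1 d1). split. apply Rmin_pos; lra. intros s Hs.
  assert (Hs1 : Rabs (s - t) < 1) by (eapply Rlt_le_trans; [apply Hs|apply Rmin_l]).
  assert (Hs2 : Rabs (s - t) < d1) by (eapply Rlt_le_trans; [apply Hs|apply Rmin_r]).
  eapply Rle_lt_trans. apply (vnorm_tri n _ (pc k s)).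
  eapply Rle_lt_trans. apply Rplus_le_compat_l. apply (vnorm_tri n _ (pc k t)).
  pose proof (ul_close k s). pose proof (ul_close k t). rewrite vnorm_sub_sym in H0.
  specialize (H1 s Hs2).
  assert (Hq : 0 < (/ 2) ^ k) by (apply pow_lt; lra).
  assert (Hbnd : forall r, Eb r <= E1 -> 2 * INR n * (2 * B * Eb r * (/ 2) ^ k) < e / 3).
  { intros r Hr. apply Rle_lt_trans with (C * (/ 2) ^ k).
    unfold C. pose proof (pos_INR n). unfold B.
    assert (0 <= INR n * ((E1 - Eb r) * (/2)^k)) by (apply Rmult_le_pos; [lra| apply Rmult_le_pos; lra]). nra.
    apply Rmult_lt_reg_l with (/ C). apply Rinv_0_lt_compat; lra.
    replace (/ C * (C * (/ 2) ^ k)) with ((/ 2) ^ k) by (field; lra).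
    replace (/ C * (e / 3)) with (e / (3 * C)) by (field; lra). auto. }
  pose proof (Hbnd s (HE1 s Hs1)). 
  assert (Eb t <= E1) by (apply HE1; rewrite Rminus_diag, Rabs_R0; lra).
  pose proof (Hbnd t H3). lra.
Qed.

Lemma ul_integ : forall t j, (j < n)%nat -> ul t j = integ n Lam P Rad eps v0 ul t j.
Proof.
  intros t j Hj.
  assert (Hz : vnorm n (vsub (ul t) (integ n Lam P Rad eps v0 ul t)) = 0).
  { apply Rle_antisym; [|apply vnorm_nonneg].
    set (A := 2 * INR n * (2 * B * Eb t) * (/ 2) + c * (2 * INR n * (2 * B * Eb t)) * Rabs t).
    assert (HA : 0 <= A).
    { unfold A, B, Eb. pose proof (pos_INR n). pose proof (exp_pos (2 * c * Rabs t)). pose proof (Rabs_pos t). pose proof Hc.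
      assert (0 <= c * (2 * INR n * (2 * / 4 * exp (2 * c * Rabs t))) * Rabs t).
      { apply Rmult_le_pos; [|lra]. apply Rmult_le_pos; [lra|]. nra. }
      nra. }
    assert (Hk : forall k, vnorm n (vsub (ul t) (integ n Lam P Rad eps v0 ul t)) <= A * (/ 2) ^ k).
    { intros k. eapply Rle_trans. apply (vnorm_tri n _ (pc (S k) t)).
      assert (E1 : vnorm n (vsub (ul t) (pc (S k) t)) <= 2 * INR n * (2 * B * Eb t) * (/ 2) * (/ 2) ^ k).
      { eapply Rle_trans. apply ul_close. simpl. lra. }
      set (w := fun s => vsub (pc (S k) s) (integ n Lam P Rad eps v0 ul s)).
      assert (Hw0 : w 0 = vzero) by (unfold w; rewrite pic_S0, integ_0; apply vsub_self).
      assert (Hwd : forall s, deriv_at n w s (vsub (vscale eps (Zl s (pc k s))) (vscale eps (Zl s (ul s))))).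
      { intros s. apply deriv_vsub. apply (pic_deriv n Lam P K Rad eps v0 HK HR HPb HPl).
        apply (integ_deriv n Lam P K Rad eps v0 HK HR HPb HPl). apply ul_gcont. }
      set (dw := fun s => vsub (vscale eps (Zl s (pc k s))) (vscale eps (Zl s (ul s)))).
      assert (Hwc : forall a b, cont_on n w a b) by (intros; apply (deriv_cont n w dw); intros; apply Hwd).
      assert (Hwb : forall s, Rabs s <= Rabs t -> vnorm n (vsub (vscale eps (Zl s (pc k s))) (vscale eps (Zl s (ul s)))) <= c * (2 * INR n * (2 * B * Eb t)) * (/ 2) ^ k).
      { intros s Hs. eapply Rle_trans. apply Zd_lip. rewrite vnorm_sub_sym.
        rewrite !Rmult_assoc. apply Rmult_le_compat_l. pose proof Hc; lra.
        eapply Rle_trans. apply ul_close. pose proof (Eb_mono s t Hs). pose proof (pos_INR n).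
        assert (0 < (/2)^k) by (apply pow_lt; lra). unfold B.
        assert (0 <= INR n * ((Eb t - Eb s) * (/2)^k)) by (apply Rmult_le_pos; [lra| apply Rmult_le_pos; lra]). nra. }
      assert (E2 : vnorm n (w t) <= c * (2 * INR n * (2 * B * Eb t)) * (/ 2) ^ k * Rabs t).
      { destruct (Rle_dec 0 t).
        - rewrite <- (vsub_zero_r (w t)), <- Hw0. rewrite Rabs_pos_eq by auto. replace t with (t - 0) at 3 by ring.
          apply (mvi n w dw _ 0 t); auto. intros s Hs. apply Hwb. rewrite !Rabs_pos_eq; lra.
        - rewrite <- (vsub_zero_r (w t)), <- Hw0, vnorm_sub_sym. rewrite Rabs_left by lra. replace (- t) with (0 - t) by ring.
          apply (mvi n w dw _ t 0); auto; try lra. intros s Hs. apply Hwb. rewrite !Rabs_left; lra. }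
      unfold w in E2. unfold A. nra. }
    apply Rnot_lt_le. intro Hlt.
    set (g := vnorm n (vsub (ul t) (integ n Lam P Rad eps v0 ul t))) in *.
    destruct (pow_half_small (g / (A + 1))) as [k Hk']. apply Rdiv_lt_0_compat; lra.
    specialize (Hk' k (le_n _)). specialize (Hk k). fold g in Hk.
    assert (0 < (/2)^k) by (apply pow_lt; lra).
    assert ((A + 1) * (/ 2) ^ k < g).
    { apply Rmult_lt_reg_l with (/ (A + 1)). apply Rinv_0_lt_compat; lra.
      replace (/ (A + 1) * ((A + 1) * (/ 2) ^ k)) with ((/ 2) ^ k) by (field; lra).
      replace (/ (A + 1) * g) with (g / (A + 1)) by (field; lra). auto. }
    nra. }
  pose proof (Cnorm_le_vnorm n (vsub (ul t) (integ n Lam P Rad eps v0 ul t)) j Hj). rewrite Hz in H.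
  pose proof (Cnorm_nonneg (vsub (ul t) (integ n Lam P Rad eps v0 ul t) j)).
  assert (H1 : Cnorm (vsub (ul t) (integ n Lam P Rad eps v0 ul t) j) = 0) by lra.
  unfold Cnorm in H1. apply sqrt_eq_0 in H1; [|nra].
  set (x := fst (vsub (ul t) (integ n Lam P Rad eps v0 ul t) j)) in H1.
  set (y := snd (vsub (ul t) (integ n Lam P Rad eps v0 ul t) j)) in H1.
  assert (x = 0) by nra. assert (y = 0) by nra.
  unfold x, y, vsub, Csub in *. cbn [fst snd] in *.
  apply injective_projections; lra.
Qed.

Lemma ul_deriv t : deriv_at n ul t (vscale eps (Zl t (ul t))).
Proof.
  apply (deriv_at_ext n ul (integ n Lam P Rad eps v0 ul)). intros; apply ul_integ; auto.
  apply (integ_deriv n Lam P K Rad eps v0 HK HR HPb HPl). apply ul_gcont.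
Qed.

Lemma ul_0 j : (j < n)%nat -> ul 0 j = v0 j.
Proof. intros. rewrite ul_integ by auto. rewrite integ_0. auto. Qed.

End PicBounds.

Lemma Phi_neg Lam t x : PhiL (fun j => - Lam j) t x = PhiL Lam (- t) x.
Proof. apply functional_extensionality; intro j. unfold PhiL. f_equal. f_equal. ring. Qed.

Lemma Phi_zero Lam x : PhiL Lam 0 x = x.
Proof.
  apply functional_extensionality; intro j. unfold PhiL, Cmul, Cexpi. rewrite Rmult_0_r, cos_0, sin_0.
  destruct (x j); simpl; f_equal; ring.
Qed.

Lemma exists_sol n Lam P K Rad eps v0 T : 0 < K -> 0 < Rad -> 0 < eps ->
  (forall x, vnorm n x <= 2 * Rad -> vnorm n (P x) <= K) ->
  (forall x y, vnorm n x <= 2 * Rad -> vnorm n y <= 2 * Rad -> vnorm n (vsub (P x) (P y)) <= K * vnorm n (vsub x y)) ->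
  vnorm n v0 <= Rad -> eps * K * T <= Rad ->
  exists v, solves_eps n Lam P eps v0 T v.
Proof.
  intros HK HR Heps HPb HPl Hv0 HT.
  set (u := ul n Lam P Rad eps v0).
  assert (Hud := ul_deriv n Lam P K Rad eps v0 HK HR Heps HPb HPl).
  assert (Hu0 := ul_0 n Lam P K Rad eps v0 HK HR Heps HPb HPl).
  assert (Hug := ul_gcont n Lam P K Rad eps v0 HK HR Heps HPb HPl). fold u in Hud, Hu0, Hug.
  assert (Hub : forall t, - T < t < T -> vnorm n (u t) <= 2 * Rad).
  { intros t Ht.
    assert (Hd : vnorm n (vsub (u t) (u 0)) <= eps * K * Rabs t).
    { destruct (Rle_dec 0 t).
      - rewrite Rabs_pos_eq by auto. replace t with (t - 0) at 2 by ring.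
        apply (mvi n u (fun s => vscale eps (Z n Lam P Rad s (u s)))); auto. apply gcont_cont_on; auto.
        intros s _. rewrite vnorm_scale, Rabs_pos_eq by lra. apply Rmult_le_compat_l. lra. apply (Z_bound n Lam P K Rad HR HPb).
      - rewrite Rabs_left by lra. rewrite vnorm_sub_sym. replace (- t) with (0 - t) by ring.
        apply (mvi n u (fun s => vscale eps (Z n Lam P Rad s (u s)))); try lra; auto. apply gcont_cont_on; auto.
        intros s _. rewrite vnorm_scale, Rabs_pos_eq by lra. apply Rmult_le_compat_l. lra. apply (Z_bound n Lam P K Rad HR HPb). }
    assert (vnorm n (u 0) = vnorm n v0) by (apply vnorm_ext; auto).
    pose proof (vnorm_tri n (u t) (u 0) vzero). rewrite !vsub_zero_r in H0.
    assert (eps * K * Rabs t <= Rad).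
    { eapply Rle_trans; [|apply HT]. apply Rmult_le_compat_l. nra. apply Rabs_le. lra. }
    lra. }
  exists (fun t => PhiL (fun j => - Lam j) t (u t)). split; [|split].
  - intros j Hj. rewrite Phi_zero. auto.
  - apply cont_on_Phi. apply gcont_cont_on; auto.
  - intros t Ht. eapply deriv_at_ext_d. 2: apply deriv_Phi; apply Hud.
    intros j Hj. simpl.
    assert (Hv : PhiL Lam (- t) (u t) = PhiL (fun j => - Lam j) t (u t)) by (rewrite Phi_neg; auto).
    assert (HPt : Pt n P Rad (PhiL (fun j => - Lam j) t (u t)) = P (PhiL (fun j => - Lam j) t (u t))).
    { unfold Pt. rewrite rtr_in; auto. rewrite Phi_neg, vnorm_Phi. apply Hub; auto. }
    unfold Z, Yf. rewrite Hv, HPt.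
    unfold vscale, PhiL, Cadd, Cmul, Cscale, Cexpi. cbn [fst snd].
    replace (- Lam j * t) with (- (Lam j * t)) by ring. rewrite cos_neg, sin_neg.
    pose proof (sin2_cos2 (Lam j * t)). unfold Rsqr in H.
    set (c := cos (Lam j * t)) in *. set (s := sin (Lam j * t)) in *.
    set (p1 := fst (P (fun j0 : nat => (cos (- Lam j0 * t) * fst (u t j0) - sin (- Lam j0 * t) * snd (u t j0),
         cos (- Lam j0 * t) * snd (u t j0) + sin (- Lam j0 * t) * fst (u t j0))) j)).
    set (p2 := snd (P (fun j0 : nat => (cos (- Lam j0 * t) * fst (u t j0) - sin (- Lam j0 * t) * snd (u t j0),
         cos (- Lam j0 * t) * snd (u t j0) + sin (- Lam j0 * t) * fst (u t j0))) j)).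
    apply injective_projections; cbn [fst snd].
    + replace (c * (eps * (c * p1 - s * p2)) - - s * (eps * (c * p2 + s * p1))) with (eps * p1 * (s * s + c * c)) by ring.
      rewrite H. ring.
    + replace (c * (eps * (c * p2 + s * p1)) + - s * (eps * (c * p1 - s * p2))) with (eps * p2 * (s * s + c * c)) by ring.
      rewrite H. ring.
Qed.

Lemma resavg_vec n Lam P a w : is_resonant_avg n Lam P a w ->
  exists G : R -> nat -> Cx, (forall j, (j < n)%nat -> G 0 j = C0) /\
    (forall t, deriv_at n G t (Yf Lam P t a)) /\
    (forall e, 0 < e -> exists T0, forall T, T0 < T -> vnorm n (vsub (vscale (/ T) (G T)) w) <= e).
Proof.
  intros H.
  set (Pj := fun j (G : R -> Cx) => (j < n)%nat -> G 0 = C0 /\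
      (forall t, derivable_pt_lim (fun s => Cre (G s)) t (Cre (PhiL Lam t (P (PhiL Lam (- t) a)) j)) /\
                 derivable_pt_lim (fun s => Cim (G s)) t (Cim (PhiL Lam t (P (PhiL Lam (- t) a)) j))) /\
      (forall e, 0 < e -> exists T0, forall T, T0 < T -> Cnorm (Csub (Cscale (/ T) (G T)) (w j)) < e)).
  set (Gj := fun j => epsilon (inhabits (fun _ : R => C0)) (Pj j)).
  assert (HG : forall j, (j < n)%nat -> Pj j (Gj j)).
  { intros j Hj. unfold Gj. apply epsilon_spec. destruct (H j Hj) as [G HGp]. exists G. intros _. exact HGp. }
  exists (fun t j => Gj j t). split; [|split].
  - intros j Hj. apply (HG j Hj Hj).
  - intros t j Hj. destruct (HG j Hj Hj) as [_ [Hd _]]. apply Hd.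
  - intros e He.
    destruct (finite_max (fun j T0 => (j < n)%nat -> forall T, T0 < T -> Cnorm (Csub (Cscale (/ T) (Gj j T)) (w j)) < e / (INR n + 1)) n) as [T0 [_ HT0]].
    { intros j d d' Hdd Hp Hj T HT. apply Hp; auto. lra. }
    { intros j Hj. destruct (HG j Hj Hj) as [_ [_ Hm]]. destruct (Hm (e / (INR n + 1))) as [T0 HT0].
      apply Rdiv_lt_0_compat; auto. pose proof (pos_INR n); lra. exists T0. intros _. auto. }
    exists T0. intros T HT. eapply Rle_trans. apply (vnorm_le_comp n _ (e / (INR n + 1))).
    intros j Hj. left. apply (HT0 j Hj Hj T HT).
    pose proof (pos_INR n). apply Rle_trans with ((INR n + 1) * (e / (INR n + 1))). 
    apply Rmult_le_compat_r. left; apply Rdiv_lt_0_compat; lra. lra. right; field; lra.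
Qed.

Lemma avg_mean_bound n (G g : R -> nat -> Cx) w M : (forall j, (j < n)%nat -> G 0 j = C0) ->
  (forall t, deriv_at n G t (g t)) -> (forall t, 0 < t -> vnorm n (g t) <= M) ->
  (forall e, 0 < e -> exists T0, forall T, T0 < T -> vnorm n (vsub (vscale (/ T) (G T)) w) <= e) ->
  vnorm n w <= M.
Proof.
  intros HG0 Hd Hb Hm. apply Rnot_lt_le. intro Hc.
  set (e := (vnorm n w - M) / 2). assert (He : 0 < e) by (unfold e; lra).
  destruct (Hm e He) as [T0 HT0]. set (T := Rmax T0 0 + 1).
  assert (HT : T0 < T) by (unfold T; pose proof (Rmax_l T0 0); lra).
  assert (HTp : 0 < T) by (unfold T; pose proof (Rmax_r T0 0); lra).
  specialize (HT0 T HT).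
  assert (HGT : vnorm n (vsub (G T) (G 0)) <= M * (T - 0)).
  { apply (mvi n G g). lra. apply (deriv_cont n G g). intros; apply Hd. intros; apply Hd.
    intros; apply Hb; lra. }
  assert (vnorm n (vsub (G T) (G 0)) = vnorm n (G T)).
  { apply vnorm_ext. intros j Hj. unfold vsub. rewrite HG0 by auto. unfold Csub, C0. destruct (G T j); simpl; f_equal; ring. }
  assert (vnorm n (vscale (/ T) (G T)) <= M).
  { rewrite vnorm_scale, Rabs_pos_eq by (left; apply Rinv_0_lt_compat; lra).
    apply Rmult_le_reg_l with T. auto. rewrite <- Rmult_assoc, Rinv_r, Rmult_1_l by lra. lra. }
  pose proof (vnorm_tri n w (vscale (/ T) (G T)) vzero). rewrite !vsub_zero_r in H1.
  rewrite vnorm_sub_sym in H1. unfold e in HT0. lra.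
Qed.

Lemma mean_sub n (G G' : R -> nat -> Cx) w w' :
  (forall e, 0 < e -> exists T0, forall T, T0 < T -> vnorm n (vsub (vscale (/ T) (G T)) w) <= e) ->
  (forall e, 0 < e -> exists T0, forall T, T0 < T -> vnorm n (vsub (vscale (/ T) (G' T)) w') <= e) ->
  forall e, 0 < e -> exists T0, forall T, T0 < T -> vnorm n (vsub (vscale (/ T) (vsub (G T) (G' T))) (vsub w w')) <= e.
Proof.
  intros H1 H2 e He. destruct (H1 (e/2)) as [T1 HT1]. lra. destruct (H2 (e/2)) as [T2 HT2]. lra.
  exists (Rmax T1 T2). intros T HT.
  replace (vsub (vscale (/ T) (vsub (G T) (G' T))) (vsub w w')) with
    (vadd (vsub (vscale (/ T) (G T)) w) (vscale (-1) (vsub (vscale (/ T) (G' T)) w'))) by vring.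
  eapply Rle_trans. apply vnorm_add. rewrite vnorm_scale, Rabs_left by lra.
  pose proof (HT1 T ltac:(eapply Rle_lt_trans; [apply Rmax_l|apply HT])).
  pose proof (HT2 T ltac:(eapply Rle_lt_trans; [apply Rmax_r|apply HT])). lra.
Qed.

Lemma Cnorm_rev z w : Rabs (Cnorm z - Cnorm w) <= Cnorm (Csub z w).
Proof.
  pose proof (vnorm_rev_tri 1 (fun _ => z) (fun _ => w)).
  assert (E : forall x, vnorm 1 (fun _ => x) = Cnorm x).
  { intros x. unfold vnorm. simpl sumR. rewrite Rplus_0_l. apply sqrt_pow2, Cnorm_nonneg. }
  rewrite !E in H. unfold vsub in H. rewrite E in H. auto.
Qed.

Lemma vnorm_neg n x : vnorm n (vscale (-1) x) = vnorm n x.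
Proof. rewrite vnorm_scale, Rabs_left by lra. ring. Qed.

Theorem corollary4p1
  (n : nat) (Lam : nat -> R) (P : (nat -> Cx) -> (nat -> Cx)) (X : R -> R)
  (v0 : nat -> Cx) (Rad : R) (a0 : R -> nat -> Cx)
  (HLam : forall j, (j < n)%nat -> Lam j <> 0)
  (HX : admissible_X X)
  (HP : Lip_X n X P)
  (Hv0 : vnorm n v0 = Rad) (HR : 0 < Rad)
  (HX2R : 0 < X (2 * Rad))
  (Ha0 : solves_effective n Lam P v0 (Rad / X (2 * Rad)) a0) :
  forall j, (j < n)%nat ->
  forall eta, 0 < eta -> exists delta, 0 < delta /\
    forall eps, 0 < eps < delta ->
      (exists v, solves_eps n Lam P eps v0 (/ eps * (Rad / X (2 * Rad))) v) /\
      (forall v, solves_eps n Lam P eps v0 (/ eps * (Rad / X (2 * Rad))) v ->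
         forall t, Rabs t <= / eps * (Rad / X (2 * Rad)) ->
           Rabs (Cnorm (v t j) - Cnorm (a0 (eps * t) j)) <= eta).
Proof.
  intros j Hj eta Heta.
  destruct HX as [HXnn [HXmono _]].
  destruct HP as [_ [HPbd HPlip]].
  set (K := X (2 * Rad)) in *. set (th := Rad / K) in *.
  assert (HK : 0 < K) by auto.
  assert (Hth : 0 < th) by (unfold th; apply Rdiv_lt_0_compat; lra).
  assert (HthK : th * K = Rad) by (unfold th; field; lra).
  assert (HPb : forall x, vnorm n x <= 2 * Rad -> vnorm n (P x) <= K) by (intros; apply HPbd; auto; lra).
  assert (HPl : forall x y, vnorm n x <= 2 * Rad -> vnorm n y <= 2 * Rad ->
             vnorm n (vsub (P x) (P y)) <= K * vnorm n (vsub x y)) by (intros; apply HPlip; auto; lra).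
  assert (HPX : forall x, vnorm n (P x) <= X (vnorm n x)) by (intros; apply HPbd; [apply vnorm_nonneg|lra]).
  assert (HYX : forall t x, vnorm n (Yf Lam P t x) <= X (vnorm n x)).
  { intros. unfold Yf. rewrite vnorm_Phi. eapply Rle_trans. apply HPX. rewrite vnorm_Phi. lra. }
  destruct Ha0 as [Ha00 [Ha0c Ha0d]].
  set (W := fun tau => epsilon (inhabits vzero) (fun w => is_resonant_avg n Lam P (a0 tau) w /\ deriv_at n a0 tau w)).
  assert (HW : forall tau, - th < tau < th -> is_resonant_avg n Lam P (a0 tau) (W tau) /\ deriv_at n a0 tau (W tau)).
  { intros tau Ht. unfold W. apply epsilon_spec. apply Ha0d. auto. }
  assert (HWX : forall tau, - th < tau < th -> vnorm n (W tau) <= X (vnorm n (a0 tau))).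
  { intros tau Ht. destruct (resavg_vec n Lam P (a0 tau) (W tau) (proj1 (HW tau Ht))) as [G [G0 [Gd Gm]]].
    apply (avg_mean_bound n G (fun t => Yf Lam P t (a0 tau))); auto. }
  assert (Ha0n : vnorm n (a0 0) = Rad) by (rewrite <- Hv0; apply vnorm_ext; auto).
  assert (Ha0b : forall tau, - th <= tau <= th -> vnorm n (a0 tau) <= 2 * Rad).
  { intros tau Ht. destruct (Rle_dec 0 tau).
    - apply (stay_bounded n X a0 W 1 th Rad HXmono (Rlt_le _ _ HX2R) ltac:(lra) ltac:(lra) HR).
      + apply (cont_on_sub n a0 (- th) th); auto; lra.
      + intros; apply HW; lra.
      + intros s Hs. rewrite Rmult_1_l. apply HWX. lra.
      + lra.
      + change (X (2 * Rad)) with K. lra.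
      + lra.
    - replace tau with (- - tau) by ring.
      apply (stay_bounded n X (fun s => a0 (- s)) (fun s => vscale (-1) (W (- s))) 1 th Rad HXmono (Rlt_le _ _ HX2R) ltac:(lra) ltac:(lra) HR).
      + pose proof (cont_on_refl n a0 (- th) 0 ltac:(apply (cont_on_sub n a0 (- th) th); auto; lra)) as Hc.
        rewrite Ropp_0, Ropp_involutive in Hc. auto.
      + intros s Hs. apply deriv_refl. apply HW. lra.
      + intros s Hs. rewrite vnorm_neg, Rmult_1_l. apply HWX. lra.
      + rewrite Ropp_0. lra.
      + change (X (2 * Rad)) with K. lra.
      + lra. }
  assert (HWl : forall tau sig, - th < tau < th -> - th < sig < th ->
            vnorm n (vsub (W tau) (W sig)) <= K * vnorm n (vsub (a0 tau) (a0 sig))).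
  { intros tau sig Ht Hs.
    destruct (resavg_vec n Lam P (a0 tau) (W tau) (proj1 (HW tau Ht))) as [G [G0 [Gd Gm]]].
    destruct (resavg_vec n Lam P (a0 sig) (W sig) (proj1 (HW sig Hs))) as [G' [G0' [Gd' Gm']]].
    apply (avg_mean_bound n (fun t => vsub (G t) (G' t)) (fun t => vsub (Yf Lam P t (a0 tau)) (Yf Lam P t (a0 sig)))).
    - intros i Hi. unfold vsub. rewrite G0, G0' by auto. unfold Csub, C0; simpl; f_equal; ring.
    - intros t. apply deriv_vsub; auto.
    - intros t _. apply (Y_lip n Lam P K Rad HPl); apply Ha0b; lra.
    - apply mean_sub; auto. }
  destruct (avg_core n (Yf Lam P) a0 W K Rad th HK Hth
     (Y_bound n Lam P K Rad HPb) (Y_lip n Lam P K Rad HPl)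
     ltac:(apply (cont_on_sub n a0 (- th) th); auto; lra)
     ltac:(intros; apply HW; lra) ltac:(intros; apply Ha0b; lra)
     ltac:(intros tau Ht; eapply Rle_trans; [apply HWX; lra|apply HXmono; [apply vnorm_nonneg|apply Ha0b; lra]])
     ltac:(intros; apply HWl; lra)
     ltac:(intros tau Ht; apply resavg_vec; apply HW; lra) eta Heta) as [d1 [Hd1 Hcore1]].
  destruct (avg_core n (fun s x => vscale (-1) (Yf Lam P (- s) x)) (fun sig => a0 (- sig))
     (fun sig => vscale (-1) (W (- sig))) K Rad th HK Hth) with (eta := eta) as [d2 [Hd2 Hcore2]]; auto.
  { intros t x Hx. rewrite vnorm_neg.
    apply (Y_bound n Lam P K Rad HPb); auto. }
  { intros t x y Hx Hy. replace (vsub (vscale (-1) (Yf Lam P (- t) x)) (vscale (-1) (Yf Lam P (- t) y)))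
      with (vscale (-1) (vsub (Yf Lam P (- t) x) (Yf Lam P (- t) y))) by vring.
    rewrite vnorm_neg.
    apply (Y_lip n Lam P K Rad HPl); auto. }
  { pose proof (cont_on_refl n a0 (- th) 0 ltac:(apply (cont_on_sub n a0 (- th) th); auto; lra)) as Hc.
    rewrite Ropp_0, Ropp_involutive in Hc. auto. }
  { intros tau Ht. apply deriv_refl. apply HW. lra. }
  { intros tau Ht. apply Ha0b. lra. }
  { intros tau Ht. rewrite vnorm_neg.
    eapply Rle_trans. apply HWX; lra. apply HXmono. apply vnorm_nonneg. apply Ha0b; lra. }
  { intros tau sig Ht Hs.
    replace (vsub (vscale (-1) (W (- tau))) (vscale (-1) (W (- sig)))) with (vscale (-1) (vsub (W (- tau)) (W (- sig)))) by vring.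
    rewrite vnorm_neg. apply HWl; lra. }
  { intros tau Ht. destruct (resavg_vec n Lam P (a0 (- tau)) (W (- tau)) (proj1 (HW (- tau) ltac:(lra)))) as [G [G0 [Gd Gm]]].
    exists (fun t => G (- t)). split; [|split].
    - intros i Hi. rewrite Ropp_0. auto.
    - intros t. apply deriv_refl. apply Gd.
    - apply (neg_mean n Lam P K Rad HK HR HPb HPl (a0 (- tau)) G (W (- tau))); auto. apply Ha0b; lra. }
  exists (Rmin d1 d2). split. apply Rmin_pos; auto.
  intros eps [Heps Hepsd].
  assert (Hd1' : eps < d1) by (eapply Rlt_le_trans; [apply Hepsd|apply Rmin_l]).
  assert (Hd2' : eps < d2) by (eapply Rlt_le_trans; [apply Hepsd|apply Rmin_r]).
  set (T := / eps * th).
  assert (HTe : th / eps = T) by (unfold T; unfold Rdiv; ring).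
  assert (HepsT : eps * T = th) by (unfold T; field; lra).
  assert (HT0 : 0 < T) by (unfold T; apply Rmult_lt_0_compat; [apply Rinv_0_lt_compat|]; lra).
  split.
  { apply (exists_sol n Lam P K Rad eps v0 T HK HR Heps HPb HPl). lra.
    replace (eps * K * T) with ((eps * T) * K) by ring. rewrite HepsT. lra. }
  intros v [Hv0' [Hvc Hvd]] t Ht.
  set (a := fun s => PhiL Lam s (v s)).
  assert (Hac : cont_on n a (- T) T) by (apply cont_on_Phi; auto).
  assert (Had : forall s, - T < s < T -> deriv_at n a s (vscale eps (Yf Lam P s (a s)))).
  { intros s Hs. eapply deriv_at_ext_d. 2: apply deriv_Phi; apply Hvd; auto.
    intros i Hi. unfold a, Yf. rewrite Phi_inv.
    unfold vscale, PhiL, Cadd, Cmul, Cscale. apply injective_projections; cbn [fst snd]; ring. }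
  assert (HaX : forall s, vnorm n (vscale eps (Yf Lam P s (a s))) <= eps * X (vnorm n (a s))).
  { intros s. rewrite vnorm_scale, Rabs_pos_eq by lra. apply Rmult_le_compat_l. lra. apply HYX. }
  assert (Ha0' : vnorm n (a 0) = Rad).
  { unfold a. rewrite Phi_zero. rewrite <- Hv0. apply vnorm_ext; auto. }
  assert (HaT : eps * T * K <= Rad) by (rewrite HepsT; lra).
  assert (Hab : forall s, - T <= s <= T -> vnorm n (a s) <= 2 * Rad).
  { intros s Hs. destruct (Rle_dec 0 s).
    - apply (stay_bounded n X a (fun s => vscale eps (Yf Lam P s (a s))) eps T Rad HXmono (Rlt_le _ _ HX2R) ltac:(lra) ltac:(lra) HR).
      + apply (cont_on_sub n a (- T) T); auto; lra.
      + intros; apply Had; lra.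
      + intros; apply HaX.
      + lra.
      + change (X (2 * Rad)) with K. lra.
      + lra.
    - replace s with (- - s) by ring.
      apply (stay_bounded n X (fun s => a (- s)) (fun s => vscale (-1) (vscale eps (Yf Lam P (- s) (a (- s))))) eps T Rad HXmono (Rlt_le _ _ HX2R) ltac:(lra) ltac:(lra) HR).
      + pose proof (cont_on_refl n a (- T) 0 ltac:(apply (cont_on_sub n a (- T) T); auto; lra)) as Hc.
        rewrite Ropp_0, Ropp_involutive in Hc. auto.
      + intros r Hr. apply deriv_refl. apply Had. lra.
      + intros r Hr. rewrite vnorm_neg. apply HaX.
      + rewrite Ropp_0. lra.
      + change (X (2 * Rad)) with K. lra.
      + lra. }
  assert (Hstart : vnorm n (vsub (a 0) (a0 0)) = 0).
  { transitivity (vnorm n vzero); [|apply vnorm_zero]. apply vnorm_ext. intros i Hi. unfold vsub, a. cbv beta. rewrite Phi_zero, Hv0', Ha00 by auto.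
    unfold vzero, Csub, C0. destruct (v0 i); simpl; f_equal; ring. }
  apply abs_le_split in Ht.
  assert (Hfin : vnorm n (vsub (a t) (a0 (eps * t))) <= eta).
  { destruct (Rle_dec 0 t).
    - apply (Hcore1 eps ltac:(lra) a); rewrite ?HTe.
      + apply (cont_on_sub n a (- T) T); auto; lra.
      + intros; apply Had; lra.
      + intros; apply Hab; lra.
      + auto.
      + lra.
    - replace t with (- - t) by ring. replace (eps * - - t) with (- (eps * - t)) by ring.
      apply (Hcore2 eps ltac:(lra) (fun s => a (- s))); rewrite ?HTe.
      + pose proof (cont_on_refl n a (- T) 0 ltac:(apply (cont_on_sub n a (- T) T); auto; lra)) as Hc.
        rewrite Ropp_0, Ropp_involutive in Hc. auto.
      + intros s Hs. eapply deriv_at_ext_d. 2: apply deriv_refl; apply Had; lra.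
        intros i Hi. unfold vscale, Cscale. apply injective_projections; cbn [fst snd]; ring.
      + intros s Hs. apply Hab. lra.
      + rewrite Ropp_0. auto.
      + lra. }
  assert (Hc : Cnorm (v t j) = Cnorm (a t j)) by (unfold a, PhiL; rewrite Cnorm_expi_mul; auto).
  rewrite Hc. eapply Rle_trans. apply Cnorm_rev.
  eapply Rle_trans. 2: apply Hfin. apply (Cnorm_le_vnorm n (vsub (a t) (a0 (eps * t))) j Hj).
Qed.
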